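(* Let $(X,\rho,\mu)$ be a $K$-doubling metric measure space, $(M,d)$ a complete metric space, $Q\ge1$ an integer, and $\mathcal D$ a differentiably complete approximate $X$-distribution for $M$. Then the approximate $X$-distribution $\mathcal D^Q$ for $\mathcal A_Q(M)$ is differentiably complete.
   Context: A $K$-doubling metric measure space ($K>0$) is a triple $(X,\rho,\mu)$ where $(X,\rho)$ is a complete separable metric space and $\mu$ is a Borel-regular outer measure with $0<\mu(B_{2r}(x))\le K\mu(B_r(x))<+\infty$ for all $x,r>0$. A set $E\ni x$ is a $\mu$-neighborhood of $x$ if there is a Borel $B\subseteq E$ with $\lim_{r\to0^+}\mu(B_r(x)\setminus B)/\mu(B_r(x))=0$; $x$ is a $\mu$-accumulation point of $A$ if $A\cap U\setminus\{x\}\neq\emptyset$ for all $\mu$-neighborhoods $U$ of $x$; $\mu\text{-}\lim$, $\mu\text{-}\limsup$ denote limit and upper limit along $\mu$-neighborhoods (e.g. $\mu\text{-}\limsup_{y\in A,y\to x}g(y)=\inf_U\sup_{y\in U\cap A\setminus\{x\}}g(y)$). $\mathcal A_Q(M)$ is the set of measures $\sum_{i=1}^Q[\![P_i]\!]$ (Dirac masses at not necessarily distinct $P_i\in M$) with metric $\mathcal G(\sum_i[\![A_i]\!],\sum_i[\![B_i]\!])=\min_\sigma\sqrt{\sum_i d(A_i,B_{\sigma(i)})^2}$ over permutations $\sigma$; it is a complete metric space. For a complete metric space $(N,e)$, $x\in X$, $P\in N$, $\mathcal C^\mu_{x,P}(N)$ is the set of classes $[F]$ of Lipschitz maps $F\colon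 B\to N$ on a $\mu$-neighborhood $B$ of $x$ with $F(x)=P$, modulo $F\sim G\iff\mu\text{-}\lim_{y\to x}e(F(y),G(y))/\rho(y,x)=0$; an approximate $X$-distribution for $N$ is any subset $\mathcal E$ of $\bigsqcup_{(x,P)}\mathcal C^\mu_{x,P}(N)$, and $\mathcal E_{x,P}=\mathcal E\cap\mathcal C^\mu_{x,P}(N)$. For $f\colon A\to N$ and a $\mu$-accumulation point $x\in A$ of $A$, $f$ is approximately $\mathcal E$-differentiable at $x$ if some $[F]\in\mathcal E_{x,f(x)}$ satisfies $\mu\text{-}\lim_{y\in A,y\to x}e(f(y),F(y))/\rho(y,x)=0$. $A_f^\mu$ is the set of $\mu$-accumulation points $x\in A$ of $A$ with $\mu\text{-}\limsup_{y\in A,y\to x}e(f(y),f(x))/\rho(y,x)<\infty$. $\mathcal E$ is differentiably complete if for every nonempty closed $C\subseteq X$ and every Lipschitz $g\colon C\to N$ and every $\mu$-measurable $B\subseteq A_g^\mu$, $g$ is approximately $\mathcal E$-differentiable at $\mu$-a.e. point of $B$. Finally, $\mathcal D^Q$ is defined by: for $\mathbf P=\sum_{i=1}^Q[\![P_i]\!]\in\mathcal A_Q(M)$, $[\mathbf F]\in\mathcal D^Q_{x_0,\mathbf P}$ iff there exist $[F_i]\in\mathcal D_{x_0,P_i}$, $i=1,\dots,Q$, such that $\mathbf F(x)=\sum_{i=1}^Q[\![F_i(x)]\!]$ for all $x$ in a Borel $\mu$-neighborhood of $x_0$, and $P_i=P_j$ implies $[F_i]=[F_j]$. *)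

(* Defs.v *)
From Stdlib Require Import Reals ClassicalEpsilon.
From Coquelicot Require Import Rbar Lim_seq.
From mathcomp Require Import all_boot fingroup perm.

Set Implicit Arguments.
Unset Strict Implicit.
Unset Printing Implicit Defensive.

Local Open Scope R_scope.

Definition is_metric (T : Type) (dist : T -> T -> R) : Prop :=
  (forall x y, 0 <= dist x y) /\
  (forall x y, dist x y = 0 <-> x = y) /\
  (forall x y, dist x y = dist y x) /\
  (forall x y z, dist x z <= dist x y + dist y z).

Definition cauchy_seq (T : Type) (dist : T -> T -> R) (u : nat -> T) : Prop :=
  forall eps, 0 < eps -> exists N : nat,
    forall n m : nat, (N <= n)%nat -> (N <= m)%nat -> dist (u n) (u m) < eps.

Definition converges_to (T : Type) (dist : T -> T -> R) (u : nat -> T) (l : T) : Prop :=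
  forall eps, 0 < eps -> exists N : nat, forall n : nat, (N <= n)%nat -> dist (u n) l < eps.

Definition complete_metric (T : Type) (dist : T -> T -> R) : Prop :=
  is_metric dist /\
  forall u : nat -> T, cauchy_seq dist u -> exists l, converges_to dist u l.

Definition separable (T : Type) (dist : T -> T -> R) : Prop :=
  exists S : T -> Prop,
    (exists f : T -> nat, forall x y, S x -> S y -> f x = f y -> x = y) /\
    (forall x eps, 0 < eps -> exists s, S s /\ dist x s < eps).

Definition ball (T : Type) (dist : T -> T -> R) (x : T) (r : R) : T -> Prop :=
  fun y => dist y x < r.

Definition is_open (T : Type) (dist : T -> T -> R) (U : T -> Prop) : Prop :=
  forall x, U x -> exists r, 0 < r /\ forall y, ball dist x r y -> U y.

Definition is_closed (T : Type) (dist : T -> T -> R) (C : T -> Prop) : Prop :=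
  is_open dist (fun x => ~ C x).

Definition sigma_algebra (T : Type) (S : (T -> Prop) -> Prop) : Prop :=
  S (fun _ => False) /\
  (forall A, S A -> S (fun x => ~ A x)) /\
  (forall A : nat -> T -> Prop, (forall n, S (A n)) -> S (fun x => exists n, A n x)).

Definition borel (T : Type) (dist : T -> T -> R) (A : T -> Prop) : Prop :=
  forall S : (T -> Prop) -> Prop,
    sigma_algebra S -> (forall U, is_open dist U -> S U) -> S A.

Fixpoint Rbar_psum (a : nat -> Rbar) (N : nat) : Rbar :=
  match N with
  | O => Rbar.Finite 0
  | S N' => Rbar_plus (Rbar_psum a N') (a N')
  end.

Definition outer_measure (T : Type) (mu : (T -> Prop) -> Rbar) : Prop :=
  mu (fun _ => False) = Rbar.Finite 0 /\
  (forall A, Rbar_le (Rbar.Finite 0) (mu A)) /\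
  (forall A B : T -> Prop, (forall x, A x -> B x) -> Rbar_le (mu A) (mu B)) /\
  (forall A : nat -> T -> Prop,
     Rbar_le (mu (fun x => exists n, A n x))
             (Sup_seq (Rbar_psum (fun n => mu (A n))))).

Definition mu_measurable (T : Type) (mu : (T -> Prop) -> Rbar) (A : T -> Prop) : Prop :=
  forall E : T -> Prop,
    mu E = Rbar_plus (mu (fun x => E x /\ A x)) (mu (fun x => E x /\ ~ A x)).

Definition borel_regular (T : Type) (dist : T -> T -> R) (mu : (T -> Prop) -> Rbar) : Prop :=
  outer_measure mu /\
  (forall A, borel dist A -> mu_measurable mu A) /\
  (forall A, exists B, borel dist B /\ (forall x, A x -> B x) /\ mu B = mu A).

Definition doubling_mms (X : Type) (rho : X -> X -> R) (mu : (X -> Prop) -> Rbar) (K : R) : Prop :=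
  0 < K /\
  complete_metric rho /\ separable rho /\ borel_regular rho mu /\
  forall x r, 0 < r ->
    Rbar_lt (Rbar.Finite 0) (mu (ball rho x (2 * r))) /\
    Rbar_le (mu (ball rho x (2 * r))) (Rbar_mult (Rbar.Finite K) (mu (ball rho x r))) /\
    Rbar_lt (mu (ball rho x r)) p_infty.

Section MuNotions.
Variables (X : Type) (rho : X -> X -> R) (mu : (X -> Prop) -> Rbar).

Definition mu_nbhd (x : X) (E : X -> Prop) : Prop :=
  E x /\
  exists B : X -> Prop, borel rho B /\ (forall y, B y -> E y) /\
    forall eps, 0 < eps -> exists delta, 0 < delta /\
      forall r, 0 < r -> r < delta ->
        Rabs (real (mu (fun y => ball rho x r y /\ ~ B y)) / real (mu (ball rho x r))) < eps.

Definition mu_acc (A : X -> Prop) (x : X) : Prop :=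
  forall U, mu_nbhd x U -> exists y, A y /\ U y /\ y <> x.

Definition mu_lim_within (A : X -> Prop) (x : X) (g : X -> R) (L : R) : Prop :=
  forall eps, 0 < eps -> exists U, mu_nbhd x U /\
    forall y, U y -> A y -> y <> x -> Rabs (g y - L) < eps.

(* mu-limsup_{y in A, y -> x} g(y) < +oo, i.e.
   inf_U sup_{y in U /\ A \ {x}} g(y) < +oo *)
Definition mu_limsup_finite (A : X -> Prop) (x : X) (g : X -> R) : Prop :=
  exists U C, mu_nbhd x U /\ forall y, U y -> A y -> y <> x -> g y <= C.

Variables (N : Type) (e : N -> N -> R).

Definition lipschitz_on (B : X -> Prop) (F : X -> N) : Prop :=
  exists L, forall y z, B y -> B z -> e (F y) (F z) <= L * rho y z.

(* (B, F) represents an element of C^mu_{x, F x}(N): F : B -> N Lipschitz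
   on a mu-neighbourhood B of x (values of F outside B are irrelevant). *)
Definition germ_rep (x : X) (B : X -> Prop) (F : X -> N) : Prop :=
  mu_nbhd x B /\ lipschitz_on B F.

Definition germ_equiv (x : X) (B : X -> Prop) (F : X -> N) (B' : X -> Prop) (G : X -> N) : Prop :=
  F x = G x /\
  mu_lim_within (fun y => B y /\ B' y) x (fun y => e (F y) (G y) / rho y x) 0.

(* An approximate X-distribution E for N is a subset of the disjoint union
   of the classes C^mu_{x,P}(N); we encode it as the predicate
   "E x B F  <->  [F] (defined on B, at x) belongs to E", which must hold only
   of genuine representatives and be closed under ~. *)
Definition approx_distribution (E : X -> (X -> Prop) -> (X -> N) -> Prop) : Prop :=
  (forall x B F, E x B F -> germ_rep x B F) /\
  (forall x B F B' G, E x B F -> germ_rep x B' G -> germ_equiv x B F B' G -> E x B' G).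

Definition approx_diff (E : X -> (X -> Prop) -> (X -> N) -> Prop)
    (A : X -> Prop) (f : X -> N) (x : X) : Prop :=
  A x /\ mu_acc A x /\
  exists B F, E x B F /\ F x = f x /\
    mu_lim_within (fun y => A y /\ B y) x (fun y => e (f y) (F y) / rho y x) 0.

Definition A_mu (A : X -> Prop) (f : X -> N) (x : X) : Prop :=
  A x /\ mu_acc A x /\ mu_limsup_finite A x (fun y => e (f y) (f x) / rho y x).

Definition diff_complete (E : X -> (X -> Prop) -> (X -> N) -> Prop) : Prop :=
  forall (C : X -> Prop) (g : X -> N) (B : X -> Prop),
    (exists c, C c) -> is_closed rho C -> lipschitz_on C g ->
    mu_measurable mu B -> (forall x, B x -> A_mu C g x) ->
    mu (fun x => B x /\ ~ approx_diff E C g x) = Rbar.Finite 0.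

End MuNotions.

(* A_Q(M): sums of Q Dirac masses = Q-tuples up to permutation         *)

Section AQ.
Variables (M : Type) (Q : nat).

(* the set of reorderings of a Q-tuple: it determines sum_i [[t i]] *)
Definition perm_orbit (t : 'I_Q -> M) : ('I_Q -> M) -> Prop :=
  fun t' => exists s : 'S_Q, forall i, t' i = t (s i).

Definition AQ : Type := { S : ('I_Q -> M) -> Prop | exists t, S = perm_orbit t }.

Definition AQ_of (t : 'I_Q -> M) : AQ := exist _ (perm_orbit t) (ex_intro _ t erefl).

Definition AQ_rep (P : AQ) : 'I_Q -> M :=
  proj1_sig (constructive_indefinite_description _ (proj2_sig P)).

Variable d : M -> M -> R.

Definition G_cost (A B : 'I_Q -> M) (s : 'S_Q) : R :=
  sqrt (\big[Rplus/0]_(i < Q) Rsqr (d (A i) (B (s i)))).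

Definition G_tuple (A B : 'I_Q -> M) : R :=
  \big[Rmin/G_cost A B 1%g]_(s : 'S_Q) G_cost A B s.

Definition AQ_dist (P P' : AQ) : R := G_tuple (AQ_rep P) (AQ_rep P').

End AQ.

Arguments AQ_dist {M} Q d P P'.

Definition DQ (X : Type) (rho : X -> X -> R) (mu : (X -> Prop) -> Rbar)
    (M : Type) (d : M -> M -> R) (Q : nat)
    (D : X -> (X -> Prop) -> (X -> M) -> Prop)
    (x0 : X) (B : X -> Prop) (F : X -> AQ M Q) : Prop :=
  germ_rep rho mu (AQ_dist Q d) x0 B F /\
  exists (B' : X -> Prop) (FF : X -> AQ M Q),
    germ_rep rho mu (AQ_dist Q d) x0 B' FF /\
    germ_equiv rho mu (AQ_dist Q d) x0 B F B' FF /\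
    exists (Bi : 'I_Q -> X -> Prop) (Fi : 'I_Q -> X -> M),
      (forall i, D x0 (Bi i) (Fi i)) /\
      (exists U, borel rho U /\ mu_nbhd rho mu x0 U /\
         (forall x, U x -> B' x /\ forall i, Bi i x) /\
         forall x, U x -> FF x = AQ_of (fun i => Fi i x)) /\
      (forall i j, Fi i x0 = Fi j x0 ->
         germ_equiv rho mu d x0 (Bi i) (Fi i) (Bi j) (Fi j)).

Arguments DQ {X} rho mu {M} d Q D x0 B F.

(* Main.v *)
Require Import Defs.
From Stdlib Require Import Reals Lra ClassicalEpsilon Classical FunctionalExtensionality PropExtensionality.
From Coquelicot Require Import Rbar Lim_seq.
From mathcomp Require Import all_boot fingroup perm.

Set Implicit Arguments.
Unset Strict Implicit.
Unset Printing Implicit Defensive.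
Local Open Scope R_scope.
Local Notation Fin := Rbar.Finite.

Lemma set_ext {T : Type} (A B : T -> Prop) : (forall x, A x <-> B x) -> A = B.
Proof. move=> H; apply: functional_extensionality => x; apply: propositional_extensionality; exact: H. Qed.

Lemma Rbar_le_fin (a b : R) : a <= b -> Rbar_le (Fin a) (Fin b).
Proof. by []. Qed.

Lemma Sup_seq_bound (u : nat -> Rbar) (l : Rbar) :
  (forall n, Rbar_le (u n) l) -> Rbar_le (Sup_seq u) l.
Proof.
move=> H. have := Sup_seq_correct u.
case: (Sup_seq u) => [s| |] /=.
- case: l H => [l| |] H Hs //=.
  + apply: Rnot_lt_le => Hlt.
    have Hp : 0 < (s - l) / 2 by lra.
    case: (Hs (mkposreal _ Hp)) => _ [n Hn]. have := H n.
    case: (u n) Hn => [un| |] //= Hn Hle; lra.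
  + case: (Hs (mkposreal _ Rlt_0_1)) => _ [n Hn]. have := H n.
    by case: (u n) Hn.
- case: l H => [l| |] H Hs //=.
  + case: (Hs l) => n Hn. have := H n. case: (u n) Hn => [un| |] //= Hn Hle; lra.
  + case: (Hs 0) => n Hn. have := H n. by case: (u n) Hn.
- by case: l H.
Qed.

Section OM.
Variables (T : Type) (mu : (T -> Prop) -> Rbar).
Hypothesis Hom : outer_measure mu.

Lemma om_empty : mu (fun _ => False) = Fin 0.
Proof. by case: Hom. Qed.
Lemma om_ge0 A : Rbar_le (Fin 0) (mu A).
Proof. by case: Hom => _ [H _]. Qed.
Lemma om_mono (A B : T -> Prop) : (forall x, A x -> B x) -> Rbar_le (mu A) (mu B).
Proof. by case: Hom => _ [_ [H _]]; apply: H. Qed.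
Lemma om_sub (A : nat -> T -> Prop) :
  Rbar_le (mu (fun x => exists n, A n x)) (Sup_seq (Rbar_psum (fun n => mu (A n)))).
Proof. by case: Hom => _ [_ [_ H]]; apply: H. Qed.

Lemma om_null_sub (A B : T -> Prop) : mu B = Fin 0 -> (forall x, A x -> B x) -> mu A = Fin 0.
Proof.
move=> HB HAB. apply: Rbar_le_antisym; last exact: om_ge0.
rewrite -HB; exact: om_mono.
Qed.

Lemma om_empty' (A : T -> Prop) : (forall x, ~ A x) -> mu A = Fin 0.
Proof. move=> H; apply: (om_null_sub om_empty) => x /H //. Qed.

Lemma psum_ge0 (a : nat -> Rbar) N : (forall n, Rbar_le (Fin 0) (a n)) -> Rbar_le (Fin 0) (Rbar_psum a N).
Proof.
move=> H; elim: N => [|N IH] /=; first exact: Rle_refl.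
have := Rbar_plus_le_compat _ _ _ _ IH (H N). by rewrite /= Rplus_0_r.
Qed.

Lemma psum_zero (a : nat -> Rbar) N : (forall n, a n = Fin 0) -> Rbar_psum a N = Fin 0.
Proof. move=> H; elim: N => [|N IH] //=. by rewrite IH H /= Rplus_0_r. Qed.

Lemma om_union_null (A : nat -> T -> Prop) : (forall n, mu (A n) = Fin 0) ->
  mu (fun x => exists n, A n x) = Fin 0.
Proof.
move=> H. apply: Rbar_le_antisym; last exact: om_ge0.
apply: Rbar_le_trans (om_sub A) _. apply: Sup_seq_bound => n.
rewrite psum_zero //; exact: Rle_refl.
Qed.

Definition seq2 (A B : T -> Prop) (n : nat) : T -> Prop :=
  match n with 0 => A | 1 => B | _ => fun _ => False end.

Lemma om_sub2 (A B : T -> Prop) :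
  Rbar_le (mu (fun x => A x \/ B x)) (Rbar_plus (mu A) (mu B)).
Proof.
have -> : (fun x => A x \/ B x) = (fun x => exists n, seq2 A B n x).
  apply: set_ext => x; split; first by case=> H; [exists 0%N|exists 1%N].
  by case=> [[|[|n]]] /=; auto.
apply: Rbar_le_trans (om_sub _) _. apply: Sup_seq_bound => n.
have Hs : forall n, Rbar_psum (fun n => mu (seq2 A B n)) (S (S n)) = Rbar_plus (mu A) (mu B).
  elim=> [|k IH] /=; first by rewrite Rbar_plus_0_l.
  rewrite /= in IH. by rewrite IH om_empty Rbar_plus_0_r.
case: n => [|[|n]].
- rewrite /=. have := om_ge0 A; have := om_ge0 B.
  case: (mu A) => [a| |]; case: (mu B) => [b| |] //= ? ?; lra.
- rewrite /= Rbar_plus_0_l. rewrite -{1}(Rbar_plus_0_r (mu A)).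
  apply: Rbar_plus_le_compat; [exact: Rbar_le_refl|exact: om_ge0].
- rewrite Hs; exact: Rbar_le_refl.
Qed.

End OM.
Section Meas.
Variables (T : Type) (mu : (T -> Prop) -> Rbar).
Hypothesis Hom : outer_measure mu.

Lemma Rbar_plus_assoc_nn (a b c : Rbar) :
  Rbar_le (Fin 0) a -> Rbar_le (Fin 0) b -> Rbar_le (Fin 0) c ->
  Rbar_plus (Rbar_plus a b) c = Rbar_plus a (Rbar_plus b c).
Proof. case: a => [a| |]; case: b => [b| |]; case: c => [c| |] //= *; f_equal; ring. Qed.

Lemma meas_compl A : mu_measurable mu A -> mu_measurable mu (fun x => ~ A x).
Proof.
move=> HA E. rewrite HA Rbar_plus_comm. f_equal. f_equal.
apply: set_ext => x; split; [case=> ? ?; split=> //; tauto|case=> ? H; split=> //; tauto].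
Qed.

Lemma meas_inter A B : mu_measurable mu A -> mu_measurable mu B ->
  mu_measurable mu (fun x => A x /\ B x).
Proof.
move=> HA HB E.
rewrite (HA E) (HB (fun x => E x /\ A x)).
rewrite (HA (fun x => E x /\ ~ (A x /\ B x))).
have -> : (fun x => (E x /\ A x) /\ B x) = (fun x => E x /\ A x /\ B x).
  by apply: set_ext => x; tauto.
have -> : (fun x => (E x /\ ~ (A x /\ B x)) /\ A x) = (fun x => (E x /\ A x) /\ ~ B x).
  by apply: set_ext => x; tauto.
have -> : (fun x => (E x /\ ~ (A x /\ B x)) /\ ~ A x) = (fun x => E x /\ ~ A x).
  by apply: set_ext => x; tauto.
apply: Rbar_plus_assoc_nn; exact: om_ge0.
Qed.

Lemma meas_null N : mu N = Fin 0 -> mu_measurable mu N.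
Proof.
move=> HN E.
rewrite (om_null_sub Hom (A := fun x => E x /\ N x) HN); last by move=> x [].
rewrite Rbar_plus_0_l. apply: Rbar_le_antisym; last by apply: om_mono => // x [].
have H1 := om_sub2 Hom (fun x => E x /\ N x) (fun x => E x /\ ~ N x).
have H0 : Rbar_le (mu E) (mu (fun x => (E x /\ N x) \/ (E x /\ ~ N x))).
  apply: om_mono => // x Ex. case: (classic (N x)); tauto.
rewrite (om_null_sub Hom (A := fun x => E x /\ N x) HN) in H1; last by move=> x [].
rewrite Rbar_plus_0_l in H1. exact: Rbar_le_trans H0 H1.
Qed.

Lemma om_add_fin (S : nat -> T -> Prop) N :
  (forall n, (n < N)%N -> mu_measurable mu (S n)) ->
  (forall n n' x, (n < N)%N -> (n' < N)%N -> n <> n' -> S n x -> S n' x -> False) ->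
  mu (fun x => exists n, (n < N)%N /\ S n x) = Rbar_psum (fun n => mu (S n)) N.
Proof.
elim: N => [|N IH] HS Hd.
  rewrite /=. apply: om_empty' => // x [n []] //.
rewrite /= (HS N (ltnSn N)).
have -> : (fun x => (exists n, (n < N.+1)%N /\ S n x) /\ S N x) = S N.
  apply: set_ext => x; split; [by case| move=> H; split=> //; by exists N].
have -> : (fun x => (exists n, (n < N.+1)%N /\ S n x) /\ ~ S N x) = (fun x => exists n, (n < N)%N /\ S n x).
  apply: set_ext => x; split.
  - case=> [[n [Hn Sn]] NS]. exists n; split=> //. rewrite ltnS leq_eqVlt in Hn.
    case/orP: Hn => // /eqP E; by subst.
  - case=> n [Hn Sn]; split; first by exists n; split=> //; exact: ltnW.
    move=> SN. apply: (Hd n N x) => //; [exact: ltnW| move=> E; subst; by rewrite ltnn in Hn].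
rewrite IH; first exact: Rbar_plus_comm.
- move=> n Hn; apply: HS; exact: ltnW.
- move=> n n' x Hn Hn'; apply: Hd; exact: ltnW.
Qed.

End Meas.
Section Borel.
Variables (X : Type) (rho : X -> X -> R).
Hypothesis Hmet : is_metric rho.

Lemma rho_ge0 x y : 0 <= rho x y. Proof. by case: Hmet. Qed.
Lemma rho_sym x y : rho x y = rho y x. Proof. by case: Hmet => _ [_ []]. Qed.
Lemma rho_tri x y z : rho x z <= rho x y + rho y z. Proof. by case: Hmet => _ [_ [_]]. Qed.
Lemma rho_eq0 x y : rho x y = 0 <-> x = y. Proof. by case: Hmet => _ []. Qed.
Lemma rho_xx x : rho x x = 0. Proof. by apply/rho_eq0. Qed.

Lemma borel_open U : is_open rho U -> borel rho U.
Proof. by move=> HU S _ HS; apply: HS. Qed.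

Lemma borel_compl A : borel rho A -> borel rho (fun x => ~ A x).
Proof. move=> HA S HS HO. have [_ [Hc _]] := HS. apply: Hc. exact: HA. Qed.

Lemma borel_cunion (A : nat -> X -> Prop) : (forall n, borel rho (A n)) -> borel rho (fun x => exists n, A n x).
Proof. move=> HA S HS HO. have [_ [_ Hu]] := HS. apply: Hu => n. exact: HA. Qed.

Lemma borel_empty : borel rho (fun _ => False).
Proof. by move=> S [] . Qed.

Lemma borel_union A B : borel rho A -> borel rho B -> borel rho (fun x => A x \/ B x).
Proof.
move=> HA HB.
have -> : (fun x => A x \/ B x) = (fun x => exists n, (match n with 0 => A | 1 => B | _ => fun _ => False end) x).
  apply: set_ext => x; split; first by case=> H; [exists 0%N|exists 1%N].
  by case=> [[|[|n]]] /=; auto.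
apply: borel_cunion => [[|[|n]]] //. exact: borel_empty.
Qed.

Lemma borel_inter A B : borel rho A -> borel rho B -> borel rho (fun x => A x /\ B x).
Proof.
move=> HA HB.
have -> : (fun x => A x /\ B x) = (fun x => ~ ((~ A x) \/ (~ B x))).
  apply: set_ext => x; split; [tauto|]. move=> H; split; apply: NNPP; tauto.
apply: borel_compl; apply: borel_union; exact: borel_compl.
Qed.

Lemma borel_full : borel rho (fun _ => True).
Proof.
have -> : (fun _ : X => True) = (fun x => ~ False) by apply: set_ext; tauto.
apply: borel_compl; exact: borel_empty.
Qed.

Lemma borel_closed C : is_closed rho C -> borel rho C.
Proof.
move=> HC. have -> : C = (fun x => ~ ~ C x) by apply: set_ext => x; split; [tauto|apply: NNPP].
apply: borel_compl; exact: borel_open.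
Qed.

Lemma ball_open x r : is_open rho (ball rho x r).
Proof.
move=> y Hy. exists (r - rho y x); split; rewrite /ball in Hy *; first lra.
move=> z Hz. rewrite /ball in Hz. have := rho_tri z y x. lra.
Qed.

Lemma borel_ball x r : borel rho (ball rho x r).
Proof. apply: borel_open; exact: ball_open. Qed.

Lemma single_closed x : is_closed rho (fun y => y = x).
Proof.
move=> y Hy. have Hp : 0 < rho y x.
  have := rho_ge0 y x. case/Rle_lt_or_eq_dec => // H. exfalso; apply: Hy; apply/rho_eq0; by rewrite H.
exists (rho y x); split=> // z Hz Ez. subst z. rewrite /ball rho_sym in Hz. lra.
Qed.

Lemma borel_single x : borel rho (fun y => y = x).
Proof. apply: borel_closed; exact: single_closed. Qed.

End Borel.
Section MMS.
Variables (X : Type) (rho : X -> X -> R) (mu : (X -> Prop) -> Rbar) (K : R).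
Hypothesis Hd : doubling_mms rho mu K.

Lemma mmet : is_metric rho. Proof. by case: Hd => _ [[Hm _] _]. Qed.
Lemma mom : outer_measure mu. Proof. by case: Hd => _ [_ [_ [[]]]]. Qed.
Lemma Kpos : 0 < K. Proof. by case: Hd. Qed.
Lemma borel_meas A : borel rho A -> mu_measurable mu A.
Proof. case: Hd => _ [_ [_ [[_ [H _]] _]]]; exact: H. Qed.
Lemma msep : separable rho. Proof. by case: Hd => _ [_ []]. Qed.

Lemma ball_fin x r : 0 < r -> mu (ball rho x r) = Fin (real (mu (ball rho x r))) /\ 0 < real (mu (ball rho x r)).
Proof.
move=> Hr. case: Hd => _ [_ [_ [_ H]]].
have [H1 [_ H3]] := H x r Hr.
have Hr2 : 0 < r / 2 by lra.
have [H4 _] := H x (r/2) Hr2. have E : 2 * (r / 2) = r by field. rewrite E in H4.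
by case: (mu (ball rho x r)) H3 H4.
Qed.

Lemma doubling_real x r : 0 < r ->
  real (mu (ball rho x (2 * r))) <= K * real (mu (ball rho x r)).
Proof.
move=> Hr. case: Hd => _ [_ [_ [_ H]]]. have [_ [H2 _]] := H x r Hr.
have [E1 _] := ball_fin x Hr. have Hr2 : 0 < 2 * r by lra.
have [E2 _] := ball_fin x Hr2. rewrite E1 E2 in H2. exact: H2.
Qed.

Lemma fin_sub A B : mu B = Fin (real (mu B)) -> (forall x, A x -> B x) ->
  mu A = Fin (real (mu A)) /\ 0 <= real (mu A) <= real (mu B).
Proof.
move=> HB HAB. have H1 := om_mono mom HAB. have H0 := om_ge0 mom A.
rewrite HB in H1. by case: (mu A) H1 H0 => [a| |] //= ? ?; split=> //; split.
Qed.

Lemma sub_ball_fin A x r : 0 < r -> (forall y, A y -> ball rho x r y) ->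
  mu A = Fin (real (mu A)) /\ 0 <= real (mu A) <= real (mu (ball rho x r)).
Proof. move=> Hr HA. apply: fin_sub => //. by case: (ball_fin x Hr). Qed.

Lemma ball_mono x r r' : r <= r' -> forall y, ball rho x r y -> ball rho x r' y.
Proof. rewrite /ball => ? ? ?; lra. Qed.

Definition dens1 (x : X) (B : X -> Prop) : Prop :=
  forall eps, 0 < eps -> exists delta, 0 < delta /\
      forall r, 0 < r -> r < delta ->
        Rabs (real (mu (fun y => ball rho x r y /\ ~ B y)) / real (mu (ball rho x r))) < eps.

Lemma ratio_nonneg A x r : 0 < r -> (forall y, A y -> ball rho x r y) ->
  0 <= real (mu A) / real (mu (ball rho x r)).
Proof.
move=> Hr HA. have [_ [H0 _]] := sub_ball_fin Hr HA. have [_ Hp] := ball_fin x Hr.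
apply: Rle_mult_inv_pos => //.
Qed.

Lemma dens1_mono x B B' : dens1 x B -> (forall y, B y -> B' y) -> dens1 x B'.
Proof.
move=> HB HBB eps He. case: (HB eps He) => d [Hd0 Hd1]. exists d; split=> // r Hr Hrd.
have := Hd1 r Hr Hrd.
have Hs1 : forall y, ball rho x r y /\ ~ B y -> ball rho x r y by move=> y [].
have Hs2 : forall y, ball rho x r y /\ ~ B' y -> ball rho x r y by move=> y [].
rewrite !Rabs_right; try (apply: Rle_ge; apply: ratio_nonneg => //).
have [_ Hp] := ball_fin x Hr.
have [E1 _] := sub_ball_fin Hr Hs1.
have H := om_mono mom (A := fun y => ball rho x r y /\ ~ B' y) (B := fun y => ball rho x r y /\ ~ B y).
have {}H : Rbar_le (mu (fun y => ball rho x r y /\ ~ B' y)) (mu (fun y => ball rho x r y /\ ~ B y)).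
  apply: H => y [Hy NB]; split=> //; move=> By; apply: NB; exact: HBB.
have [E2 _] := sub_ball_fin Hr Hs2. rewrite E1 E2 /= in H.
move=> Hlt. apply: Rle_lt_trans Hlt. apply: Rmult_le_compat_r => //.
apply: Rlt_le; exact: Rinv_0_lt_compat.
Qed.

Lemma dens1_inter x B1 B2 : dens1 x B1 -> dens1 x B2 -> dens1 x (fun y => B1 y /\ B2 y).
Proof.
move=> H1 H2 eps He. have He2 : 0 < eps / 2 by lra.
case: (H1 _ He2) => d1 [Hd1 Hd1']. case: (H2 _ He2) => d2 [Hd2 Hd2'].
exists (Rmin d1 d2); split; first exact: Rmin_glb_lt.
move=> r Hr Hrd. have Hr1 : r < d1 by apply: Rlt_le_trans Hrd (Rmin_l _ _).
have Hr2 : r < d2 by apply: Rlt_le_trans Hrd (Rmin_r _ _).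
have := Hd1' r Hr Hr1. have := Hd2' r Hr Hr2.
have Hs1 : forall y, ball rho x r y /\ ~ B1 y -> ball rho x r y by move=> y [].
have Hs2 : forall y, ball rho x r y /\ ~ B2 y -> ball rho x r y by move=> y [].
have Hs3 : forall y, ball rho x r y /\ ~ (B1 y /\ B2 y) -> ball rho x r y by move=> y [].
rewrite !Rabs_right; try (apply: Rle_ge; apply: ratio_nonneg => //).
have [_ Hp] := ball_fin x Hr.
have [E1 _] := sub_ball_fin Hr Hs1. have [E2 _] := sub_ball_fin Hr Hs2.
have [E3 _] := sub_ball_fin Hr Hs3.
have H := om_sub2 mom (fun y => ball rho x r y /\ ~ B1 y) (fun y => ball rho x r y /\ ~ B2 y).
have H' := om_mono mom (A := fun y => ball rho x r y /\ ~ (B1 y /\ B2 y))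
   (B := fun y => (ball rho x r y /\ ~ B1 y) \/ (ball rho x r y /\ ~ B2 y)).
have {H'} H' : Rbar_le (mu (fun y => ball rho x r y /\ ~ (B1 y /\ B2 y)))
   (mu (fun y => (ball rho x r y /\ ~ B1 y) \/ (ball rho x r y /\ ~ B2 y))).
  apply: H' => y [Hy NB]. case: (classic (B1 y)) => ?; [right|left]; split=> //; tauto.
have H3 := Rbar_le_trans _ _ _ H' H. rewrite E1 E2 E3 /= in H3.
move=> Ha Hb. rewrite /Rdiv in Ha Hb *.
have Hi : 0 < / real (mu (ball rho x r)) by apply: Rinv_0_lt_compat.
have := Rmult_le_compat_r _ _ _ (Rlt_le _ _ Hi) H3. lra.
Qed.

Lemma dens1_full x : dens1 x (fun _ => True).
Proof.
move=> eps He. exists 1; split; first lra. move=> r Hr _.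
rewrite (om_empty' mom (A := fun y => ball rho x r y /\ ~ True)); last by move=> y [].
rewrite /= /Rdiv Rmult_0_l Rabs_R0 //.
Qed.

Lemma nbhd_iff x E : mu_nbhd rho mu x E <-> E x /\ exists B, borel rho B /\ (forall y, B y -> E y) /\ dens1 x B.
Proof. by []. Qed.

Lemma nbhd_full x : mu_nbhd rho mu x (fun _ => True).
Proof. split=> //. exists (fun _ => True); split; [exact: borel_full|split=> //]. exact: dens1_full. Qed.

Lemma nbhd_inter x U V : mu_nbhd rho mu x U -> mu_nbhd rho mu x V -> mu_nbhd rho mu x (fun y => U y /\ V y).
Proof.
move=> [HU [B1 [HB1 [HB1U HD1]]]] [HV [B2 [HB2 [HB2V HD2]]]].
split=> //. exists (fun y => B1 y /\ B2 y); split; first exact: borel_inter.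
split; first by move=> y [? ?]; split; auto.
exact: dens1_inter.
Qed.

Lemma nbhd_mono x U V : mu_nbhd rho mu x U -> (forall y, U y -> V y) -> mu_nbhd rho mu x V.
Proof.
move=> [HU [B [HB [HBU HD]]]] HUV. split; first by auto.
exists B; repeat split=> //. by move=> y /HBU /HUV.
Qed.

Lemma nbhd_borel x U : mu_nbhd rho mu x U ->
  exists W, borel rho W /\ mu_nbhd rho mu x W /\ (forall y, W y -> U y).
Proof.
move=> [HU [B [HB [HBU HD]]]]. exists (fun y => y = x \/ B y); split.
  apply: borel_union => //; exact: borel_single mmet x.
split; last by move=> y [->|/HBU].
split; first by left. exists B; repeat split=> //; by right.
Qed.

End MMS.
Section Greedy.
Variables (X : Type) (rho : X -> X -> R).
Hypothesis Hmet : is_metric rho.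
Variables (E : X -> Prop) (rad : X -> R).
Hypothesis Hrad : forall x, E x -> 0 < rad x <= 1.

Definition meets (x y : X) := exists z, ball rho x (rad x) z /\ ball rho y (rad y) z.
Definition avail (L : list X) (y : X) := E y /\ forall x, List.In x L -> ~ meets x y.

Lemma pick_spec L : (exists y, avail L y) ->
  exists y, avail L y /\ forall y', avail L y' -> rad y' < 2 * rad y.
Proof.
move=> Hex.
pose S r := exists y, avail L y /\ r = rad y.
have Hb : bound S by exists 1 => r [y [[Ey _] ->]]; case: (Hrad Ey).
have Hne : exists r, S r by case: Hex => y Hy; exists (rad y), y.
case: (completeness S Hb Hne) => m [Hub Hlub].
case: Hex => y0 Hy0. have Hy0p : 0 < rad y0 by case: Hy0 => /Hrad [].
have Hm0 : rad y0 <= m by apply: Hub; exists y0.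
apply: NNPP => Hno.
have : m <= m / 2.
  apply: Hlub => r [y [Hy ->]]. apply: Rnot_lt_le => Hlt. apply: Hno. exists y; split=> //.
  move=> y' Hy'. have : rad y' <= m by apply: Hub; exists y'. lra.
lra.
Qed.

Definition pick (L : list X) : option X :=
  match excluded_middle_informative (exists y, avail L y) with
  | left H => Some (proj1_sig (constructive_indefinite_description _ (pick_spec H)))
  | right _ => None
  end.

Lemma pick_some L x : pick L = Some x ->
  avail L x /\ forall y', avail L y' -> rad y' < 2 * rad x.
Proof.
rewrite /pick. case: excluded_middle_informative => // H [<-].
exact: (proj2_sig (constructive_indefinite_description _ (pick_spec H))).
Qed.

Lemma pick_none L : pick L = None -> forall y, ~ avail L y.
Proof. rewrite /pick. case: excluded_middle_informative => // H _ y Hy. apply: H; by exists y. Qed.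

Fixpoint chosen (n : nat) : list X :=
  match n with
  | O => nil
  | S n => match pick (chosen n) with Some x => x :: chosen n | None => chosen n end
  end.

Definition sel n := pick (chosen n).

Lemma chosen_mono n k x : List.In x (chosen n) -> List.In x (chosen (n + k)).
Proof.
elim: k => [|k IH]; first by rewrite addn0.
rewrite addnS /=. case: (pick _) => [y|] Hx; [right|]; exact: IH.
Qed.

Lemma sel_in k x : sel k = Some x -> List.In x (chosen k.+1).
Proof. by rewrite /sel /= => ->; left. Qed.

Lemma meets_sym x y : meets x y -> meets y x.
Proof. by case=> z [H1 H2]; exists z. Qed.

Lemma sel_disj k k' x x' : sel k = Some x -> sel k' = Some x' -> k <> k' -> ~ meets x x'.
Proof.
wlog: k k' x x' / (k < k')%N.
  move=> W H1 H2 Hne. case: (ltngtP k k') => Hk.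
  - exact: W H1 H2 Hne.
  - move=> Hm. apply: (W k' k x' x Hk H2 H1) => //; first by auto. exact: meets_sym.
  - by [].
move=> Hk H1 H2 _.
have Hin : List.In x (chosen k') by have := chosen_mono (k' - k.+1) (sel_in H1); rewrite subnKC.
have [[_ Hav] _] := pick_some H2. exact: Hav.
Qed.

Lemma sel_E k x : sel k = Some x -> E x.
Proof. by move=> /pick_some [[]]. Qed.

Lemma greedy_cover y : E y ->
  (forall n, avail (chosen n) y) \/ exists k x, sel k = Some x /\ rho y x < 3 * rad x.
Proof.
move=> Ey.
suff H : forall n, avail (chosen n) y \/ exists k x, sel k = Some x /\ rho y x < 3 * rad x.
  case: (classic (exists n, ~ avail (chosen n) y)) => [[n Hn]|Hn].
  - case: (H n) => [/Hn //|]; by right.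
  - left => n. apply: NNPP => Hc. apply: Hn; by exists n.
elim=> [|n IH]; first by left; split=> //.
case: IH => [Hav|]; last by right.
case Hs: (sel n) => [x|].
- have [_ Hx] := pick_some Hs. have Hlt := Hx y Hav.
  case: (classic (meets x y)) => Hm.
  + right. exists n, x; split=> //. case: Hm => z [Hz1 Hz2].
    rewrite /ball in Hz1 Hz2. have := rho_tri Hmet y z x. rewrite (rho_sym Hmet y z). lra.
  + left. rewrite /= -/(sel n) Hs. split=> // x' [<-|Hx'] //. by case: Hav => _ /(_ x' Hx').
- exfalso. exact: (pick_none Hs Hav).
Qed.

End Greedy.
Fixpoint rpsum (a : nat -> R) (N : nat) : R :=
  match N with O => 0 | S N => rpsum a N + a N end.

Lemma psum_fin (a : nat -> R) (b : nat -> Rbar) N : (forall k, b k = Fin (a k)) ->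
  Rbar_psum b N = Fin (rpsum a N).
Proof. move=> H; elim: N => [|N IH] //=. by rewrite IH H. Qed.

Lemma rpsum_le (a b : nat -> R) N : (forall k, a k <= b k) -> rpsum a N <= rpsum b N.
Proof. move=> H; elim: N => [|N IH] /=; first lra. have := H N; lra. Qed.

Lemma rpsum_scal (a : nat -> R) c N : rpsum (fun k => c * a k) N = c * rpsum a N.
Proof. elim: N => [|N IH] /=; [ring| rewrite IH; ring]. Qed.

Lemma rpsum_lower (a : nat -> R) c N : (forall k, c <= a k) -> INR N * c <= rpsum a N.
Proof. move=> H; elim: N => [|N IH]; first by rewrite /=; lra. rewrite S_INR /=. have := H N. lra. Qed.

Lemma INR_le_pow2 j : INR j <= 2 ^ j.
Proof. elim: j => [|j IH]; first by rewrite /=; lra. rewrite S_INR /=. have : 1 <= 2 ^ j by apply: pow_R1_Rle; lra. lra. Qed.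

Section Density.
Variables (X : Type) (rho : X -> X -> R) (mu : (X -> Prop) -> Rbar) (K : R).
Hypothesis Hd : doubling_mms rho mu K.

Local Notation mr A := (real (mu A)).
Local Notation ball := (ball rho).

Lemma doubling_iter x j r : 0 < r -> mr (ball x (2 ^ j * r)) <= K ^ j * mr (ball x r).
Proof.
move=> Hr. elim: j => [|j IH] /=; first by rewrite !Rmult_1_l; exact: Rle_refl.
have Hp : 0 < 2 ^ j * r by apply: Rmult_lt_0_compat => //; apply: pow_lt; lra.
rewrite Rmult_assoc. apply: Rle_trans (doubling_real Hd x Hp) _.
rewrite Rmult_assoc. apply: Rmult_le_compat_l => //. exact: Rlt_le (Kpos Hd).
Qed.

Lemma ball_sub_mr x r y r' : 0 < r' -> (forall z, ball x r z -> ball y r' z) -> mr (ball x r) <= mr (ball y r').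
Proof. move=> Hr' H. by have [_ [_ ?]] := sub_ball_fin Hd Hr' H. Qed.

Lemma ball_lower o m r0 : 0 < m -> 0 < r0 ->
  exists c, 0 < c /\ forall x, rho x o < m -> c <= mr (ball x r0).
Proof.
move=> Hm Hr0.
have He : 0 < r0 / (2 * m) by apply: Rdiv_lt_0_compat; lra.
case: (archimed_cor1 _ He) => j [Hj Hj0].
have Hjp : 0 < INR j by apply: lt_0_INR.
have HK := Kpos Hd.
have [_ Hom] := ball_fin Hd o Hm.
exists (mr (ball o m) / K ^ j); split.
  apply: Rdiv_lt_0_compat => //; exact: pow_lt.
move=> x Hx.
have H2j : 2 * m <= 2 ^ j * r0.
  have := INR_le_pow2 j.
  have : 2 * m < INR j * r0.
    have := Rmult_lt_compat_l (INR j) _ _ Hjp Hj. rewrite Rinv_r; last lra.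
    move=> H1. have : INR j * (r0 / (2 * m)) * (2 * m) = INR j * r0 by field; lra.
    have := Rmult_lt_compat_r (2 * m) _ _ ltac:(lra) H1. lra.
  move=> ? ?. have : INR j * r0 <= 2 ^ j * r0 by apply: Rmult_le_compat_r; lra. lra.
have H1 : mr (ball o m) <= mr (ball x (2 ^ j * r0)).
  apply: ball_sub_mr; first by apply: Rmult_lt_0_compat => //; apply: pow_lt; lra.
  move=> z; rewrite /Defs.ball => Hz. have := rho_tri (mmet Hd) z o x. rewrite (rho_sym (mmet Hd) o x). lra.
have := doubling_iter x j Hr0.
have HKj : 0 < K ^ j by apply: pow_lt.
rewrite /Rdiv. move=> H2. apply: (Rmult_le_reg_l (K ^ j)) => //.
rewrite -Rmult_assoc (Rmult_comm (K ^ j)) Rmult_assoc Rinv_r; last lra. lra.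
Qed.

Definition Eset (A : X -> Prop) (o : X) (m t : R) (x : X) : Prop :=
  A x /\ rho x o < m /\ forall delta, 0 < delta -> exists r, 0 < r /\ r < delta /\
    t * mr (ball x r) <= mr (fun y => ball x r y /\ ~ A y).

Definition Wset (A : X -> Prop) (o : X) (m delta : R) (y : X) : Prop :=
  rho y o < m + 1 /\ ~ A y /\ exists a, A a /\ rho y a < delta.

Lemma mr_empty : mr (fun _ => False) = 0.
Proof. by rewrite (om_empty (mom Hd)). Qed.

Lemma vitali_bound A o m t delta : is_closed rho A -> 0 < m -> 0 < t -> 0 < delta -> delta <= 1 ->
  Rbar_le (mu (Eset A o m t)) (Fin (K * K / t * mr (Wset A o m delta))).
Proof.
move=> HA Hm Ht Hdl Hd1.
have Hmet := mmet Hd. have Hom := mom Hd. have HK := Kpos Hd.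
have Hr : forall x, Eset A o m t x -> exists r, 0 < r /\ r < delta /\
    t * mr (ball x r) <= mr (fun y => ball x r y /\ ~ A y).
  by move=> x [_ [_ H]]; apply: H.
pose rad x := match excluded_middle_informative (Eset A o m t x) with
  | left H => proj1_sig (constructive_indefinite_description _ (Hr x H)) | right _ => 1 end.
have Hrad : forall x, Eset A o m t x -> 0 < rad x /\ rad x < delta /\
    t * mr (ball x (rad x)) <= mr (fun y => ball x (rad x) y /\ ~ A y).
  move=> x Ex. rewrite /rad. case: excluded_middle_informative => // H.
  exact: (proj2_sig (constructive_indefinite_description _ (Hr x H))).
have Hrad1 : forall x, Eset A o m t x -> 0 < rad x <= 1.
  move=> x /Hrad [? [? _]]; split; lra.
have Hm1 : 0 < m + 1 by lra.
have [HWfin [HW0 _]] : mu (Wset A o m delta) = Fin (mr (Wset A o m delta)) /\ 0 <= mr (Wset A o m delta) <= mr (ball o (m + 1)).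
  apply: (sub_ball_fin Hd (A := Wset A o m delta) Hm1) => y [Hy _]; exact: Hy.
have no_inf : forall y, Eset A o m t y -> ~ (forall n, avail rho (Eset A o m t) rad (chosen rho Hrad1 n) y).
  move=> y Ey Hall.
  have Hs : forall n, exists x, sel rho Hrad1 n = Some x /\ rad y < 2 * rad x.
    move=> n. case Hsn: (sel rho Hrad1 n) => [x|].
    - exists x; split=> //. have [_ H] := pick_some Hsn. exact: H.
    - exfalso. exact: (pick_none Hsn (Hall n)).
  pose f n := match sel rho Hrad1 n with Some x => x | None => y end.
  have Hf : forall n, sel rho Hrad1 n = Some (f n) /\ rad y < 2 * rad (f n).
    move=> n. rewrite /f. by case: (Hs n) => x [-> ?].
  have Hry : 0 < rad y / 2 by have := Hrad1 y Ey; lra.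
  case: (ball_lower o Hm Hry) => c [Hc Hcl].
  pose S1 n := ball (f n) (rad (f n)).
  have HfE : forall n, Eset A o m t (f n) by move=> n; exact: sel_E (proj1 (Hf n)).
  have HS1 : forall n, mu (S1 n) = Fin (mr (S1 n)) /\ c <= mr (S1 n).
    move=> n. have [Hp _] := Hrad1 _ (HfE n). have [E1 _] := ball_fin Hd (f n) Hp. split=> //.
    apply: Rle_trans (Hcl (f n) (proj1 (proj2 (HfE n)))) _.
    apply: ball_sub_mr => // z. rewrite /Defs.ball. have := proj2 (Hf n). lra.
  have Hsub : forall N, Rbar_le (mu (fun x => exists n, (n < N)%N /\ S1 n x)) (mu (ball o (m + 1))).
    move=> N. apply: (om_mono Hom) => z [n [_ Hz]]. rewrite /S1 /Defs.ball in Hz *.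
    have := rho_tri Hmet z (f n) o. have := proj1 (proj2 (HfE n)). have := Hrad1 _ (HfE n). lra.
  have Hadd : forall N, mu (fun x => exists n, (n < N)%N /\ S1 n x) = Fin (rpsum (fun n => mr (S1 n)) N).
    move=> N. rewrite (om_add_fin Hom (S := S1)).
    - apply: psum_fin => k. exact: (proj1 (HS1 k)).
    - move=> n _. apply: (borel_meas Hd). rewrite /S1. exact: borel_ball.
    - move=> n n' x _ _ Hnn' H1 H2. apply: (sel_disj (proj1 (Hf n)) (proj1 (Hf n')) Hnn').
      by exists x.
  have [Eb _] := ball_fin Hd o Hm1.
  have Hbd : forall N, INR N * c <= mr (ball o (m + 1)).
    move=> N. have := Hsub N. rewrite Hadd Eb /= => H. apply: Rle_trans H.
    apply: rpsum_lower => k. exact: (proj2 (HS1 k)).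
  have Hep : 0 < c / (mr (ball o (m + 1)) + 1).
    apply: Rdiv_lt_0_compat => //. have := proj2 (ball_fin Hd o Hm1). lra.
  case: (archimed_cor1 _ Hep) => N [HN HN0].
  have HNp : 0 < INR N by apply: lt_0_INR.
  have HB := proj2 (ball_fin Hd o Hm1).
  have Hpos : 0 < INR N * (mr (ball o (m + 1)) + 1) by apply: Rmult_lt_0_compat; lra.
  have H1 := Rmult_lt_compat_r _ _ _ Hpos HN.
  have E1 : / INR N * (INR N * (mr (ball o (m + 1)) + 1)) = mr (ball o (m + 1)) + 1 by field; lra.
  have E2 : c / (mr (ball o (m + 1)) + 1) * (INR N * (mr (ball o (m + 1)) + 1)) = INR N * c by field; lra.
  rewrite E1 E2 in H1. have := Hbd N. lra.
pose S3 k z := match sel rho Hrad1 k with Some x => ball x (3 * rad x) z | None => False end.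
pose S1 k z := match sel rho Hrad1 k with Some x => ball x (rad x) z | None => False end.
pose S1A k z := S1 k z /\ ~ A z.
have Hcov : forall y, Eset A o m t y -> exists k, S3 k y.
  move=> y Ey. case: (greedy_cover Hmet Hrad1 Ey) => [/(no_inf y Ey) //|[k [x [Hk Hyx]]]].
  exists k. by rewrite /S3 Hk.
have Hfin : forall k, (mu (S3 k) = Fin (mr (S3 k)) /\ mu (S1 k) = Fin (mr (S1 k)) /\
     mu (S1A k) = Fin (mr (S1A k))) /\ mr (S3 k) <= K * K / t * mr (S1A k).
  move=> k. rewrite /S3 /S1A /S1. case Hk: (sel rho Hrad1 k) => [x|]; last first.
    rewrite (om_empty' Hom (A := fun z => False /\ ~ A z)); last by move=> z [].
    rewrite (om_empty Hom) /=. split; [by []|lra].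
  have Ex := sel_E Hk. have [Hp [_ Hrat]] := Hrad x Ex.
  have Hp3 : 0 < 3 * rad x by lra.
  have [E3 _] := ball_fin Hd x Hp3. have [E1 Hpos] := ball_fin Hd x Hp.
  have [E1A _] := sub_ball_fin Hd Hp (A := fun z => ball x (rad x) z /\ ~ A z) (fun z Hz => proj1 Hz).
  split; first by [].
  have Hp2 : 0 < 2 * rad x by lra.
  have H4 : mr (ball x (3 * rad x)) <= mr (ball x (2 * (2 * rad x))).
    apply: ball_sub_mr; first lra. move=> z; rewrite /Defs.ball; lra.
  have H5 := doubling_real Hd x Hp2. have H6 := doubling_real Hd x Hp.
  have H7 : mr (ball x (rad x)) <= / t * mr (fun z => ball x (rad x) z /\ ~ A z).
    apply: (Rmult_le_reg_l t) => //. rewrite -Rmult_assoc Rinv_r; lra.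
  have H8 : K * mr (ball x (2 * rad x)) <= K * (K * mr (ball x (rad x))) by apply: Rmult_le_compat_l; lra.
  have H9 : K * K * mr (ball x (rad x)) <= K * K * (/ t * mr (fun z => ball x (rad x) z /\ ~ A z)).
    apply: Rmult_le_compat_l => //. apply: Rmult_le_pos; lra.
  change (mr (ball x (3 * rad x)) <= K * K / t * mr (fun z => ball x (rad x) z /\ ~ A z)).
  rewrite /Rdiv. lra.
apply: Rbar_le_trans (om_mono Hom (B := fun y => exists k, S3 k y) Hcov) _.
apply: Rbar_le_trans (om_sub Hom S3) _.
apply: Sup_seq_bound => N.
rewrite (psum_fin (a := fun k => mr (S3 k))); last by move=> k; case: (Hfin k) => [[]].
rewrite /=.
apply: Rle_trans (rpsum_le N (fun k => proj2 (Hfin k))) _.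
rewrite rpsum_scal. apply: Rmult_le_compat_l.
  rewrite /Rdiv; apply: Rmult_le_pos; [apply: Rmult_le_pos; lra| apply: Rlt_le; exact: Rinv_0_lt_compat].
have Hadd := om_add_fin Hom (S := S1A) (N := N).
rewrite (psum_fin (a := fun k => mr (S1A k))) in Hadd; last by move=> k; case: (Hfin k) => [[_ []]].
have Hsub : Rbar_le (mu (fun x => exists n, (n < N)%N /\ S1A n x)) (mu (Wset A o m delta)).
  apply: (om_mono Hom) => z [n [_]]. rewrite /S1A /S1. case Hk: (sel rho Hrad1 n) => [x|]; last by case.
  move=> [Hz NA]. have Ex := sel_E Hk. have [Hp [Hpd _]] := Hrad x Ex.
  case: Ex => [Ax [Hxo _]]. rewrite /Defs.ball in Hz. split; last split=> //.
  - have := rho_tri Hmet z x o. lra.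
  - exists x; split=> //. lra.
rewrite Hadd in Hsub.
- rewrite HWfin in Hsub. exact: Hsub.
- move=> n _. rewrite /S1A /S1. case: (sel rho Hrad1 n) => [x|].
  + apply: (borel_meas Hd). apply: borel_inter; [exact: borel_ball| exact: borel_compl (borel_closed HA)].
  + apply: (borel_meas Hd). have -> : (fun z => False /\ ~ A z) = (fun _ => False) by apply: set_ext => z; tauto.
    exact: borel_empty.
- move=> n n' x _ _ Hnn'. rewrite /S1A /S1.
  case Hn: (sel rho Hrad1 n) => [y|] [H1 _] //. case Hn': (sel rho Hrad1 n') => [y'|] [H2 _] //.
  apply: (sel_disj Hn Hn' Hnn'). by exists x.
Qed.

End Density.
Section Density2.
Variables (X : Type) (rho : X -> X -> R) (mu : (X -> Prop) -> Rbar) (K : R).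
Hypothesis Hd : doubling_mms rho mu K.
Local Notation mr A := (real (mu A)).
Local Notation ball := (ball rho).

Lemma first_exit (W : nat -> X -> Prop) y : W 0%N y -> forall n, ~ W n y ->
  exists i, W i y /\ ~ W i.+1 y.
Proof.
move=> H0. elim=> [|n IH] Hn; first by [].
case: (classic (W n y)) => Hw; first by exists n. exact: IH.
Qed.

Lemma cont_down (W : nat -> X -> Prop) :
  (forall j, mu_measurable mu (W j)) -> (forall j y, W j.+1 y -> W j y) ->
  (forall y, ~ forall j, W j y) -> mu (W 0%N) = Fin (mr (W 0%N)) ->
  forall a, 0 < a -> exists j, mr (W j) < a.
Proof.
move=> Hm Hdec Hemp Hfin a Ha. apply: NNPP => Hno.
have Hge : forall j, a <= mr (W j) by move=> j; apply: Rnot_lt_le => H; apply: Hno; exists j.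
have Hom := mom Hd.
have Hsub0 : forall j y, W j y -> W 0%N y by elim=> [|j IH] y //; move/Hdec; exact: IH.
have Hf : forall j, mu (W j) = Fin (mr (W j)) by move=> j; case: (fin_sub Hd Hfin (Hsub0 j)).
pose Z i y := W i y /\ ~ W i.+1 y.
have HZ : forall i, mu (Z i) = Fin (mr (W i) - mr (W i.+1)).
  move=> i. have H := Hm i.+1 (W i). rewrite (Hf i) in H.
  have E2 : (fun x => W i x /\ W i.+1 x) = W i.+1 by apply: set_ext => x; split; [case|move=> H'; split=> //; exact: Hdec].
  rewrite E2 (Hf i.+1) in H.
  case: (fin_sub Hd (Hf i) (A := Z i) (fun x Hx => proj1 Hx)) => E3 _. rewrite /Z in E3 *. rewrite E3 in H *.
  case: H => H. f_equal. lra.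
have Hcov : forall y, W 0%N y -> exists i, Z i y.
  move=> y Hy. apply: NNPP => Hn. apply: (Hemp y) => j. apply: NNPP => Hj.
  case: (first_exit Hy Hj) => i Hi. apply: Hn; by exists i.
have H := Rbar_le_trans _ _ _ (om_mono Hom (B := fun y => exists i, Z i y) Hcov) (om_sub Hom Z).
have Hps : forall N, Rbar_psum (fun n => mu (Z n)) N = Fin (mr (W 0%N) - mr (W N)).
  elim=> [|N IH] /=; first by f_equal; ring. rewrite IH HZ /=. f_equal; ring.
have : Rbar_le (mu (W 0%N)) (Fin (mr (W 0%N) - a)).
  apply: Rbar_le_trans H _. apply: Sup_seq_bound => N. rewrite Hps /=. have := Hge N. lra.
rewrite Hfin /=. lra.
Qed.

Lemma Wset_open (A : X -> Prop) delta : is_open rho (fun y => exists a, A a /\ rho y a < delta).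
Proof.
have Hmet := mmet Hd.
move=> y [a [Aa Hya]]. exists (delta - rho y a); split; first lra.
move=> z Hz. exists a; split=> //. rewrite /Defs.ball in Hz. have := rho_tri Hmet z y a. lra.
Qed.

Lemma Eset_null A o m t : is_closed rho A -> 0 < m -> 0 < t -> mu (Eset rho mu A o m t) = Fin 0.
Proof.
move=> HA Hm Ht. have Hmet := mmet Hd. have Hom := mom Hd. have HK := Kpos Hd.
pose W j := Wset rho A o m (/ (INR j + 1)).
have Hinv : forall j, 0 < / (INR j + 1) by move=> j; apply: Rinv_0_lt_compat; have := pos_INR j; lra.
have Hm1 : 0 < m + 1 by lra.
have HW0 : mu (W 0%N) = Fin (mr (W 0%N)).
  have [E _] : mu (W 0%N) = Fin (mr (W 0%N)) /\ _ := sub_ball_fin Hd (A := W 0%N) (x := o) Hm1 (fun y Hy => proj1 Hy). exact: E.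
have Hcd := cont_down (W := W).
have [HEfin [HE0 _]] : mu (Eset rho mu A o m t) = Fin (mr (Eset rho mu A o m t)) /\ 0 <= mr (Eset rho mu A o m t) <= mr (ball o m).
  apply: (sub_ball_fin Hd (A := Eset rho mu A o m t) Hm) => y [_ [Hy _]]; exact: Hy.
rewrite HEfin. f_equal. apply: Rle_antisym => //.
apply: Rnot_lt_le => Hpos.
have Hc : 0 < t / (K * K) * mr (Eset rho mu A o m t).
  apply: Rmult_lt_0_compat => //. apply: Rdiv_lt_0_compat => //; nra.
have Hmeas : forall j, mu_measurable mu (W j).
  move=> j. rewrite /W /Wset. apply: (borel_meas Hd). apply: borel_inter; first exact: borel_ball.
  apply: borel_inter; first exact: borel_compl (borel_closed HA).
  apply: borel_open; exact: Wset_open.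
have Hdec : forall j y, W j.+1 y -> W j y.
  move=> j y [H1 [H2 [a [Aa Ha]]]]. split=> //; split=> //. exists a; split=> //.
  apply: Rlt_le_trans Ha _. apply: Rinv_le_contravar; first by have := pos_INR j; lra.
  rewrite S_INR; lra.
have Hemp : forall y, ~ forall j, W j y.
  move=> y Hall. case: (Hall 0%N) => [_ [NAy _]].
  case: (HA y NAy) => r [Hr Hball].
  case: (archimed_cor1 _ Hr) => n [Hn Hn0].
  case: (Hall n) => [_ [_ [a [Aa Hya]]]]. apply: (Hball a) => //. rewrite /Defs.ball rho_sym //.
  apply: Rlt_trans Hya _. apply: Rlt_trans Hn. apply: Rinv_lt_contravar.
    apply: Rmult_lt_0_compat; [exact: lt_0_INR|have := pos_INR n; lra].
  lra.
case: (Hcd Hmeas Hdec Hemp HW0 _ Hc) => j HWj.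
have Hdj : / (INR j + 1) <= 1.
    rewrite -Rinv_1. apply: Rinv_le_contravar; first lra. have := pos_INR j; lra.
  have Hb := vitali_bound Hd o HA Hm Ht (Hinv j) Hdj. rewrite HEfin /= in Hb.
  change (mr (Eset rho mu A o m t) <= K * K / t * mr (W j)) in Hb.
  have : K * K / t * mr (W j) < mr (Eset rho mu A o m t).
    have HKK : 0 < K * K / t by apply: Rdiv_lt_0_compat => //; nra.
    have := Rmult_lt_compat_l _ _ _ HKK HWj.
    have -> : K * K / t * (t / (K * K) * mr (Eset rho mu A o m t)) = mr (Eset rho mu A o m t).
      field; split; lra.
    by [].
  lra.
Qed.

Theorem density_thm A : is_closed rho A -> mu (fun x => A x /\ ~ dens1 rho mu x A) = Fin 0.
Proof.
move=> HA. have Hmet := mmet Hd. have Hom := mom Hd.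
case: (classic (exists x, A x /\ ~ dens1 rho mu x A)) => [[o _]|Hne]; last first.
  apply: om_empty' => // x Hx; apply: Hne; by exists x.
pose F n k := Eset rho mu A o (INR k + 1) (/ (INR n + 1)).
apply: (om_null_sub Hom (B := fun x => exists n, (fun x => exists k, F n k x) x)).
  apply: om_union_null => // n. apply: om_union_null => // k.
  apply: Eset_null => //; [have := pos_INR k; lra|apply: Rinv_0_lt_compat; have := pos_INR n; lra].
move=> x [Ax Hnd].
have [eps [He Heps]] : exists eps, 0 < eps /\ forall delta, 0 < delta -> exists r, 0 < r /\ r < delta /\
   eps <= real (mu (fun y => ball x r y /\ ~ A y)) / real (mu (ball x r)).
  apply: NNPP => Hc. apply: Hnd => eps He. apply: NNPP => Hc2. apply: Hc. exists eps; split=> // delta Hdl.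
  apply: NNPP => Hc3. apply: Hc2. exists delta; split=> // r Hr Hrd.
  rewrite Rabs_right; last by apply: Rle_ge; apply: (ratio_nonneg Hd Hr) => y [].
  apply: Rnot_le_lt => Hle. apply: Hc3. by exists r.
case: (archimed_cor1 _ He) => n [Hn Hn0].
have [k Hk] : exists k, rho x o < INR k + 1.
  case: (archimed_cor1 (/ (rho x o + 1))) => [|k [Hk Hk0]].
    apply: Rinv_0_lt_compat; have := rho_ge0 Hmet x o; lra.
  exists k. have Hp : 0 < rho x o + 1 by have := rho_ge0 Hmet x o; lra.
  have HkI : 0 < INR k by apply: lt_0_INR.
  have := Rinv_lt_contravar _ _ (Rmult_lt_0_compat _ _ (Rinv_0_lt_compat _ HkI) (Rinv_0_lt_compat _ Hp)) Hk.
  rewrite !Rinv_inv. lra.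
exists n, k. split=> //; split=> // delta Hdl.
case: (Heps _ Hdl) => r [Hr [Hrd Hrat]]. exists r; split=> //; split=> //.
have [_ Hbp] := ball_fin Hd x Hr.
have Hnp : 0 < INR n by apply: lt_0_INR.
have Ht : / (INR n + 1) <= eps.
  apply: Rlt_le. apply: Rle_lt_trans Hn. apply: Rinv_le_contravar => //. lra.
have := Rmult_le_compat_r (real (mu (ball x r))) _ _ (Rlt_le _ _ Hbp) (Rle_trans _ _ _ Ht Hrat).
rewrite /Rdiv Rmult_assoc Rinv_l; last lra. rewrite Rmult_1_r. by [].
Qed.

End Density2.
From HB Require Import structures.
From Stdlib Require Import ProofIrrelevance.
Lemma Rplus_assoc' : associative Rplus. Proof. move=> a b c; ring. Qed.
Lemma Rplus_comm' : commutative Rplus. Proof. move=> a b; ring. Qed.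
Lemma Rplus_0_l' : left_id 0 Rplus. Proof. move=> a; ring. Qed.
HB.instance Definition _ := Monoid.isComLaw.Build R 0 Rplus Rplus_assoc' Rplus_comm' Rplus_0_l'.

Lemma bigmin_le (I : finType) (F : I -> R) x0 i : \big[Rmin/x0]_(j : I) F j <= F i.
Proof.
rewrite /index_enum. have : i \in Finite.enum I by rewrite -enumT mem_enum.
elim: (Finite.enum I) => [|a s IH] //. rewrite big_cons inE. case/orP => [/eqP <-|/IH H].
- exact: Rmin_l.
- apply: Rle_trans H. exact: Rmin_r.
Qed.

Lemma bigmin_le_idx (I : finType) (F : I -> R) x0 : \big[Rmin/x0]_(j : I) F j <= x0.
Proof.
rewrite /index_enum. elim: (Finite.enum I) => [|a s IH]; first by rewrite big_nil; exact: Rle_refl.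
rewrite big_cons. apply: Rle_trans IH. exact: Rmin_r.
Qed.

Lemma bigmin_ind (I : finType) (F : I -> R) x0 (P : R -> Prop) :
  P x0 -> (forall i, P (F i)) -> P (\big[Rmin/x0]_(j : I) F j).
Proof.
move=> H0 HF. apply: big_ind => // a b Ha Hb. rewrite /Rmin. by case: Rle_dec.
Qed.

Lemma bigmin_att (I : finType) (F : I -> R) x0 :
  \big[Rmin/x0]_(j : I) F j = x0 \/ exists i, \big[Rmin/x0]_(j : I) F j = F i.
Proof.
apply: (bigmin_ind (P := fun y => y = x0 \/ exists i, y = F i)); first by left.
move=> i; right; by exists i.
Qed.

Lemma sum_ge0 (I : finType) (P : pred I) (F : I -> R) : (forall i, 0 <= F i) -> 0 <= \big[Rplus/0]_(j | P j) F j.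
Proof. move=> H. apply: big_ind => //; [exact: Rle_refl| move=> a b ? ?; lra]. Qed.

Lemma sum_le (I : finType) (F G : I -> R) : (forall i, F i <= G i) ->
  \big[Rplus/0]_(j : I) F j <= \big[Rplus/0]_(j : I) G j.
Proof.
move=> H. apply: (big_ind2 (fun a b => a <= b)) => //; [exact: Rle_refl| move=> a b c e ? ?; lra].
Qed.

Lemma term_le_sum (I : finType) (F : I -> R) i : (forall j, 0 <= F j) -> F i <= \big[Rplus/0]_(j : I) F j.
Proof.
move=> H. rewrite (bigD1 i) //=. have := sum_ge0 (fun j => j != i) H. lra.
Qed.

Lemma sum_const_le n (F : 'I_n -> R) c : (forall i, F i <= c) -> \big[Rplus/0]_(j < n) F j <= INR n * c.
Proof.
move=> H. apply: Rle_trans (sum_le H) _. rewrite big_const_ord.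
elim: n {F H} => [|n IH]; first by rewrite /=; lra. rewrite S_INR /=. lra.
Qed.

Section AQlem.
Variables (M : Type) (d : M -> M -> R) (Q : nat).
Hypothesis Hdm : is_metric d.

Lemma cost_ge_term (A B : 'I_Q -> M) (s : 'S_Q) i : d (A i) (B (s i)) <= G_cost d A B s.
Proof.
rewrite /G_cost. have H0 := rho_ge0 Hdm (A i) (B (s i)).
rewrite -{1}(sqrt_Rsqr _ H0). apply: sqrt_le_1_alt.
apply: (term_le_sum (F := fun j => Rsqr (d (A j) (B (s j))))) => j. exact: Rle_0_sqr.
Qed.

Lemma cost_bound (A B : 'I_Q -> M) (s : 'S_Q) c : 0 <= c -> (forall i, d (A i) (B (s i)) <= c) ->
  G_cost d A B s <= sqrt (INR Q) * c.
Proof.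
move=> Hc H. rewrite /G_cost -(sqrt_Rsqr c Hc) -sqrt_mult; [|exact: pos_INR|exact: Rle_0_sqr].
apply: sqrt_le_1_alt. apply: sum_const_le => i. apply: Rsqr_incr_1 => //. exact: rho_ge0.
Qed.

Lemma cost_ge0 (A B : 'I_Q -> M) (s : 'S_Q) : 0 <= G_cost d A B s.
Proof. exact: sqrt_pos. Qed.

Lemma G_le (A B : 'I_Q -> M) (s : 'S_Q) : G_tuple d A B <= G_cost d A B s.
Proof. exact: bigmin_le. Qed.

Lemma G_att (A B : 'I_Q -> M) : exists s, G_tuple d A B = G_cost d A B s.
Proof. rewrite /G_tuple. case: (bigmin_att (fun s => G_cost d A B s) (G_cost d A B 1%g)) => [->|[s ->]]; by eexists. Qed.

Lemma G_ge0 (A B : 'I_Q -> M) : 0 <= G_tuple d A B.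
Proof. case: (G_att A B) => s ->. exact: cost_ge0. Qed.

Lemma AQ_rep_spec (P : AQ M Q) : proj1_sig P = perm_orbit (AQ_rep P).
Proof. rewrite /AQ_rep. exact: (proj2_sig (constructive_indefinite_description _ (proj2_sig P))). Qed.

Lemma AQ_of_rep (P : AQ M Q) : AQ_of (AQ_rep P) = P.
Proof.
case: P => S HS. rewrite /AQ_of. apply: subset_eq_compat. by rewrite -(AQ_rep_spec (exist _ S HS)).
Qed.

Lemma orbit_refl (t : 'I_Q -> M) : perm_orbit t t.
Proof. exists 1%g => i. by rewrite perm1. Qed.

Lemma orbit_eq (t t' : 'I_Q -> M) : perm_orbit t t' -> perm_orbit t' = perm_orbit t.
Proof.
case=> s Hs. apply: set_ext => u; split.
- case=> s' Hs'. exists (s' * s)%g => i. by rewrite Hs' Hs permM.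
- case=> s' Hs'. exists (s' * s^-1)%g => i. rewrite Hs' Hs permM permKV //.
Qed.

Lemma AQ_of_perm (t : 'I_Q -> M) (s : 'S_Q) : AQ_of (fun i => t (s i)) = AQ_of t.
Proof. rewrite /AQ_of. apply: subset_eq_compat. apply: orbit_eq. by exists s. Qed.

Lemma AQ_rep_of (t : 'I_Q -> M) : exists s : 'S_Q, forall i, AQ_rep (AQ_of t) i = t (s i).
Proof.
have E := AQ_rep_spec (AQ_of t). rewrite /= in E.
have : perm_orbit t (AQ_rep (AQ_of t)) by rewrite E; exact: orbit_refl.
by [].
Qed.

Lemma AQ_dist_of (t t' : 'I_Q -> M) :
  AQ_dist Q d (AQ_of t) (AQ_of t') <= sqrt (\big[Rplus/0]_(i < Q) Rsqr (d (t i) (t' i))).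
Proof.
rewrite /AQ_dist. case: (AQ_rep_of t) => p Hp. case: (AQ_rep_of t') => p' Hp'.
apply: Rle_trans (G_le _ _ (p * p'^-1)%g) _. rewrite /G_cost.
apply: sqrt_le_1_alt. apply: Req_le.
transitivity (\big[Rplus/0]_(i < Q) Rsqr (d (t (p i)) (t' (p i)))).
  apply: eq_bigr => i _. by rewrite Hp Hp' permM permKV.
by rewrite [RHS](reindex_inj (@perm_inj _ p)).
Qed.

Lemma AQ_dist_ge0 P P' : 0 <= AQ_dist Q d P P'.
Proof. exact: G_ge0. Qed.

Lemma AQ_dist_refl P : AQ_dist Q d P P = 0.
Proof.
apply: Rle_antisym; last exact: AQ_dist_ge0.
rewrite -(AQ_of_rep P). apply: Rle_trans (AQ_dist_of _ _) _.
have E : \big[Rplus/0]_(i < Q) Rsqr (d (AQ_rep P i) (AQ_rep P i)) = 0.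
  rewrite big1 // => i _. by rewrite rho_xx // Rsqr_0.
rewrite E sqrt_0. exact: Rle_refl.
Qed.

End AQlem.
Section Cluster.
Variables (M : Type) (d : M -> M -> R) (Q : nat).
Hypothesis Hdm : is_metric d.

Definition peq (a b : M) : bool := if excluded_middle_informative (a = b) then true else false.
Lemma peqP a b : reflect (a = b) (peq a b).
Proof. rewrite /peq. case: excluded_middle_informative => H; by constructor. Qed.

Definition fidx (t : 'I_Q -> M) (i : 'I_Q) : 'I_Q := [arg min_(j < i | peq (t j) (t i)) (j : nat)].

Lemma fidx_spec (t : 'I_Q -> M) i : t (fidx t i) = t i /\ forall j, t j = t i -> (fidx t i <= j)%N.
Proof.
rewrite /fidx. case: arg_minnP; first by apply/peqP.
move=> k /peqP Hk Hmin; split=> // j Hj. apply: Hmin. by apply/peqP.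
Qed.

Lemma fidx_eq t i : t (fidx t i) = t i. Proof. by case: (fidx_spec t i). Qed.

Lemma fidx_val t i j : t i = t j -> fidx t i = fidx t j.
Proof.
move=> E. apply: val_inj => /=. apply/eqP; rewrite eqn_leq.
case: (fidx_spec t i) => Ei Hi. case: (fidx_spec t j) => Ej Hj.
rewrite Hi ?Hj //; [by rewrite Ei E|by rewrite Ej E].
Qed.

Lemma fidx_idem t i : fidx t (fidx t i) = fidx t i.
Proof. apply: fidx_val. exact: fidx_eq. Qed.

Definition Firsts (t : 'I_Q -> M) : {set 'I_Q} := [set i | fidx t i == i].
Definition ndist (t : 'I_Q -> M) : nat := #|Firsts t|.

Lemma firsts_inj t i i' : i \in Firsts t -> i' \in Firsts t -> t i = t i' -> i = i'.
Proof.
rewrite !inE => /eqP Hi /eqP Hi' E. by rewrite -Hi -Hi' (fidx_val E).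
Qed.

Lemma close_eq (P0 : 'I_Q -> M) s0 a b : (forall i j, P0 i <> P0 j -> s0 <= d (P0 i) (P0 j)) ->
  d (P0 a) (P0 b) < s0 -> P0 a = P0 b.
Proof. move=> Hs H. apply: NNPP => Hne. have := Hs _ _ Hne. lra. Qed.

Lemma L1 (P0 Y : 'I_Q -> M) (s : 'S_Q) s0 eps :
  (forall i j, P0 i <> P0 j -> s0 <= d (P0 i) (P0 j)) -> 2 * eps < s0 ->
  (forall j, d (Y j) (P0 (s j)) <= eps) ->
  (ndist P0 <= ndist Y)%N /\ ((ndist Y <= ndist P0)%N -> forall j j', P0 (s j) = P0 (s j') -> Y j = Y j').
Proof.
move=> Hs He Hc.
have dsym := rho_sym Hdm. have dtri := rho_tri Hdm.
pose phi i := fidx Y ((s^-1)%g i).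
have HYs : forall i, d (Y ((s^-1)%g i)) (P0 i) <= eps by move=> i; have := Hc ((s^-1)%g i); rewrite permKV.
have Hinj : {in Firsts P0 &, injective phi}.
  move=> i i' Hi Hi' E. apply: (firsts_inj Hi Hi').
  have EY : Y ((s^-1)%g i) = Y ((s^-1)%g i') by rewrite -(fidx_eq Y) -/(phi i) E /phi fidx_eq.
  apply: (close_eq Hs). have := HYs i. have := HYs i'. rewrite EY.
  have := dtri (P0 i) (Y ((s^-1)%g i')) (P0 i'). rewrite (dsym (P0 i) (Y _)). lra.
have Hsub : phi @: Firsts P0 \subset Firsts Y.
  apply/subsetP => k /imsetP [i _ ->]. by rewrite inE /phi fidx_idem.
have Hcard : #|phi @: Firsts P0| = #|Firsts P0| by apply: card_in_imset.
split.
  rewrite /ndist -Hcard. exact: subset_leq_card.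
move=> Hle.
have Heq : phi @: Firsts P0 = Firsts Y.
  apply/eqP. rewrite eqEcard Hsub Hcard. exact: Hle.
have Hrep : forall j, exists i, i \in Firsts P0 /\ Y j = Y ((s^-1)%g i) /\ P0 (s j) = P0 i.
  move=> j. have : fidx Y j \in Firsts Y by rewrite inE fidx_idem.
  rewrite -Heq => /imsetP [i Hi E]. exists i; split=> //.
  have EY : Y j = Y ((s^-1)%g i) by rewrite -(fidx_eq Y j) E /phi fidx_eq.
  split=> //. apply: (close_eq Hs). have := Hc j. have := HYs i. rewrite -EY.
  have := dtri (P0 (s j)) (Y j) (P0 i). rewrite (dsym (P0 (s j)) (Y j)). lra.
move=> j j' E.
case: (Hrep j) => i [Hi [E1 E2]]. case: (Hrep j') => i' [Hi' [E1' E2']].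
have Eii : i = i' by apply: (firsts_inj Hi Hi'); rewrite -E2 -E2'.
by rewrite E1 E1' Eii.
Qed.

Definition sep (t : 'I_Q -> M) : R :=
  \big[Rmin/1]_(p : 'I_Q * 'I_Q) (if peq (t p.1) (t p.2) then 1 else d (t p.1) (t p.2)).

Lemma sep_pos t : 0 < sep t.
Proof.
apply: bigmin_ind; first lra. move=> [i j] /=. case: peqP => E; first lra.
have := rho_ge0 Hdm (t i) (t j). case/Rle_lt_or_eq_dec => // H. exfalso; apply: E. apply/(rho_eq0 Hdm). by rewrite H.
Qed.

Lemma sep_le1 t : sep t <= 1.
Proof. exact: bigmin_le_idx. Qed.

Lemma sep_le t i j : t i <> t j -> sep t <= d (t i) (t j).
Proof.
move=> E. apply: Rle_trans (bigmin_le _ _ (i, j)) _ => /=. case: peqP => // _; exact: Rle_refl.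
Qed.

Lemma sep_ge t c : c <= 1 -> (forall i j, t i <> t j -> c <= d (t i) (t j)) -> c <= sep t.
Proof.
move=> H1 H. apply: bigmin_ind => // [[i j]] /=. case: peqP => // E. exact: H.
Qed.

End Cluster.
Lemma closed_inter (X : Type) (rho : X -> X -> R) (A B : X -> Prop) :
  is_closed rho A -> is_closed rho B -> is_closed rho (fun x => A x /\ B x).
Proof.
move=> HA HB x Hx. case: (classic (A x)) => Ax.
- have NB : ~ B x by move=> Bx; apply: Hx.
  case: (HB x NB) => r [Hr H]. exists r; split=> // y /H NBy [_ By]; exact: NBy By.
- case: (HA x Ax) => r [Hr H]. exists r; split=> // y /H NAy [Ay _]; exact: NAy Ay.
Qed.

Lemma cball_closed (X : Type) (rho : X -> X -> R) (Hmet : is_metric rho) y0 r :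
  is_closed rho (fun y => rho y y0 <= r).
Proof.
move=> x Hx. have Hx' : r < rho x y0 by apply: Rnot_le_lt.
exists (rho x y0 - r); split; first lra. move=> y Hy Hle. rewrite /Defs.ball in Hy.
have := rho_tri Hmet x y y0. rewrite (rho_sym Hmet x y). lra.
Qed.

Section Main1.
Variables (X : Type) (rho : X -> X -> R) (M : Type) (d : M -> M -> R) (Q : nat).
Hypothesis Hmet : is_metric rho.
Hypothesis Hdm : is_metric d.
Variables (C : X -> Prop) (g : X -> AQ M Q) (L : R).
Hypothesis HL : 0 < L.
Hypothesis Hlip : forall y z, C y -> C z -> AQ_dist Q d (g y) (g z) <= L * rho y z.

Local Notation G y := (AQ_rep (g y)).

Definition Ck (k : nat) (y : X) : Prop := C y /\ (ndist (G y) <= k)%N.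

Definition hfun (s : R) (p : M) (y : X) : M :=
  match excluded_middle_informative (exists v, (exists j, G y j = v) /\ d v p < s / 2) with
  | left H => proj1_sig (constructive_indefinite_description _ H)
  | right _ => p end.

Lemma match_dist y z : C y -> C z -> exists s : 'S_Q, forall j, d (G y j) (G z (s j)) <= L * rho y z.
Proof.
move=> Cy Cz. have H := Hlip Cy Cz. rewrite /AQ_dist in H.
case: (G_att d (G y) (G z)) => s Hs. exists s => j. apply: Rle_trans (cost_ge_term Hdm _ _ s j) _.
by rewrite -Hs.
Qed.

Lemma KL y0 y : C y0 -> Ck (ndist (G y0)) y -> rho y y0 <= sep d (G y0) / (8 * L) ->
  exists s : 'S_Q,
   (forall i, hfun (sep d (G y0)) (G y0 i) y = G y ((s^-1)%g i)) /\
   (forall i, d (G y ((s^-1)%g i)) (G y0 i) <= sep d (G y0) / 8) /\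
   (forall i j, d (G y j) (G y0 i) < sep d (G y0) / 2 -> G y j = hfun (sep d (G y0)) (G y0 i) y).
Proof.
move=> Cy0 [Cy Hk] Hr.
set P0 := G y0. set s0 := sep d P0.
have Hs0 : 0 < s0 := sep_pos Hdm P0.
have dsym := rho_sym Hdm. have dtri := rho_tri Hdm.
case: (match_dist Cy Cy0) => s Hs.
have HLr : L * rho y y0 <= s0 / 8.
  have := Rmult_le_compat_l L _ _ (Rlt_le _ _ HL) Hr.
  have -> : L * (s0 / (8 * L)) = s0 / 8 by field; lra. by [].
have Hc : forall j, d (G y j) (P0 (s j)) <= s0 / 8 by move=> j; apply: Rle_trans (Hs j) HLr.
have Hsep : forall i j, P0 i <> P0 j -> s0 <= d (P0 i) (P0 j) by move=> i j; exact: sep_le.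
have [_ HL1] := L1 Hdm Hsep (eps := s0 / 8) ltac:(lra) Hc.
have HL1' := HL1 Hk.
have Hc' : forall i, d (G y ((s^-1)%g i)) (P0 i) <= s0 / 8 by move=> i; have := Hc ((s^-1)%g i); rewrite permKV.
have Huniq : forall i j, d (G y j) (P0 i) < s0 / 2 -> G y j = G y ((s^-1)%g i).
  move=> i j Hj. apply: HL1'. rewrite permKV. apply: (close_eq Hsep).
  have := Hc j. have := dtri (P0 (s j)) (G y j) (P0 i). rewrite (dsym (P0 (s j)) (G y j)). lra.
have Hh : forall i, hfun s0 (P0 i) y = G y ((s^-1)%g i).
  move=> i. rewrite /hfun. case: excluded_middle_informative => [H|H].
  - case: (constructive_indefinite_description _ H) => v [[j Ej] Hv] /=. rewrite -Ej in Hv *. exact: Huniq.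
  - exfalso; apply: H. exists (G y ((s^-1)%g i)); split; first by eexists. have := Hc' i. lra.
exists s; split=> //; split=> // i j Hj. rewrite Hh. exact: Huniq.
Qed.

Lemma KL2 y0 y : C y0 -> Ck (ndist (G y0)) y -> rho y y0 <= sep d (G y0) / (8 * L) ->
  g y = AQ_of (fun i => hfun (sep d (G y0)) (G y0 i) y).
Proof.
move=> Cy0 Hy Hr. case: (KL Cy0 Hy Hr) => s [Hh _].
have -> : (fun i => hfun (sep d (G y0)) (G y0 i) y) = (fun i => G y ((s^-1)%g i)).
  apply: functional_extensionality => i. exact: Hh.
by rewrite AQ_of_perm AQ_of_rep.
Qed.

Lemma KL3 y0 y z i : C y0 -> Ck (ndist (G y0)) y -> rho y y0 <= sep d (G y0) / (8 * L) ->
  Ck (ndist (G y0)) z -> rho z y0 <= sep d (G y0) / (8 * L) ->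
  d (hfun (sep d (G y0)) (G y0 i) y) (hfun (sep d (G y0)) (G y0 i) z) <= L * rho y z.
Proof.
move=> Cy0 Hy Hry Hz Hrz.
case: (KL Cy0 Hy Hry) => s [Hh [Hc _]]. case: (KL Cy0 Hz Hrz) => s' [_ [_ Hu]].
have Hs0 := sep_pos Hdm (G y0).
case: Hy => Cy _. case: Hz => Cz _.
case: (match_dist Cy Cz) => t Ht.
rewrite Hh. set j := (s^-1)%g i.
have Hyz : rho y z <= 2 * (sep d (G y0) / (8 * L)).
  have := rho_tri Hmet y y0 z. rewrite (rho_sym Hmet y0 z). lra.
have HLyz : L * rho y z <= sep d (G y0) / 4.
  have := Rmult_le_compat_l L _ _ (Rlt_le _ _ HL) Hyz.
  have -> : L * (2 * (sep d (G y0) / (8 * L))) = sep d (G y0) / 4 by field; lra. by [].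
rewrite -(Hu i (t j)).
- exact: Ht.
- have := Ht j. have := Hc i. rewrite -/j.
  have := rho_tri Hdm (G z (t j)) (G y j) (G y0 i). rewrite (rho_sym Hdm (G z (t j)) (G y j)). lra.
Qed.

Lemma Ck_closed k : is_closed rho C -> is_closed rho (Ck k).
Proof.
move=> HC x Hx. case: (classic (C x)) => Cx; last first.
  case: (HC x Cx) => r [Hr H]. exists r; split=> // y /H NC [Cy _]; exact: NC Cy.
have Hk : (k < ndist (G x))%N by rewrite ltnNge; apply/negP => H; apply: Hx.
have Hs := sep_pos Hdm (G x).
exists (sep d (G x) / (4 * L)); split; first by apply: Rdiv_lt_0_compat; lra.
move=> y Hy [Cy Hky]. rewrite /Defs.ball in Hy.
case: (match_dist Cy Cx) => s Hs'.
have Hsep : forall i j, G x i <> G x j -> sep d (G x) <= d (G x i) (G x j) by move=> i j; exact: sep_le.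
have HLy : L * rho y x <= sep d (G x) / 4.
  have := Rmult_le_compat_l L _ _ (Rlt_le _ _ HL) (Rlt_le _ _ Hy).
  have -> : L * (sep d (G x) / (4 * L)) = sep d (G x) / 4 by field; lra. by [].
have [H1 _] := L1 Hdm Hsep (eps := sep d (G x) / 4) ltac:(lra) (fun j => Rle_trans _ _ _ (Hs' j) HLy).
have := leq_trans H1 Hky. by rewrite leqNgt Hk.
Qed.

End Main1.
Section Main2.
Variables (X : Type) (rho : X -> X -> R) (mu : (X -> Prop) -> Rbar) (K : R).
Variables (M : Type) (d : M -> M -> R) (Q : nat) (D : X -> (X -> Prop) -> (X -> M) -> Prop).
Hypothesis Hd : doubling_mms rho mu K.
Hypothesis Hdm : is_metric d.
Hypothesis HD : approx_distribution rho mu d D.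

Lemma dens1_open x U : is_open rho U -> U x -> dens1 rho mu x U.
Proof.
move=> HU Ux eps He. case: (HU x Ux) => r0 [Hr0 Hb]. exists r0; split=> // r Hr Hrr.
rewrite (om_empty' (mom Hd) (A := fun y => ball rho x r y /\ ~ U y)).
  by rewrite /= /Rdiv Rmult_0_l Rabs_R0.
move=> y [Hy NU]. apply: NU. apply: Hb. rewrite /Defs.ball in Hy *. lra.
Qed.

Lemma nbhd_forall x (U : 'I_Q -> X -> Prop) : (forall i, mu_nbhd rho mu x (U i)) ->
  mu_nbhd rho mu x (fun y => forall i, U i y).
Proof.
move=> HU.
have H : forall l : seq 'I_Q, mu_nbhd rho mu x (fun y => forall i, i \in l -> U i y).
  elim=> [|a l IH].
  - apply: nbhd_mono (nbhd_full Hd x) _ => y _ i. by rewrite in_nil.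
  - apply: nbhd_mono (nbhd_inter Hd (HU a) IH) _ => y [Ha Hl] i. rewrite inE.
    case/orP => [/eqP -> //|]. exact: Hl.
apply: nbhd_mono (H (enum 'I_Q)) _ => y Hy i. apply: Hy. by rewrite mem_enum.
Qed.

Lemma germ_equiv_refl (N : Type) (e : N -> N -> R) x B (F : X -> N) :
  (forall p, e p p = 0) -> germ_equiv rho mu e x B F B F.
Proof.
move=> He. split=> // eps Heps. exists (fun _ => True); split; first exact: nbhd_full Hd x.
move=> y _ _ _. by rewrite He /Rdiv Rmult_0_l Rminus_0_r Rabs_R0.
Qed.

Lemma AQ_dist_of_bound (t t' : 'I_Q -> M) c : 0 <= c -> (forall i, d (t i) (t' i) <= c) ->
  AQ_dist Q d (AQ_of t) (AQ_of t') <= sqrt (INR Q) * c.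
Proof.
move=> Hc H. apply: Rle_trans (AQ_dist_of d t t') _.
rewrite -(sqrt_Rsqr c Hc) -sqrt_mult; [|exact: pos_INR|exact: Rle_0_sqr].
apply: sqrt_le_1_alt. apply: sum_const_le => i. apply: Rsqr_incr_1 => //. exact: rho_ge0.
Qed.

Variables (C : X -> Prop) (g : X -> AQ M Q) (L : R).
Hypothesis HL : 0 < L.
Hypothesis Hlip : forall y z, C y -> C z -> AQ_dist Q d (g y) (g z) <= L * rho y z.
Hypothesis HCc : is_closed rho C.
Variable y0 : X.
Hypothesis Cy0 : C y0.

Local Notation G y := (AQ_rep (g y)).
Local Notation s0 := (sep d (G y0)).
Local Notation r0 := (sep d (G y0) / (8 * L)).
Local Notation k0 := (ndist (G y0)).
Definition Piece (y : X) : Prop := Ck C g k0 y /\ rho y y0 <= r0.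
Local Notation h i := (hfun d g (sep d (G y0)) (G y0 i)).

Lemma Piece_closed : is_closed rho Piece.
Proof. apply: closed_inter; [exact: (@Ck_closed _ _ _ _ _ Hdm _ _ _ HL Hlip k0 HCc)|exact: cball_closed (mmet Hd) y0 r0]. Qed.

Definition Vcore (x : X) (y : X) : Prop := y = x \/ ~ C y \/ (Ck C g k0 y /\ ball rho y0 r0 y).

Lemma Vcore_nbhd x : C x -> rho x y0 < r0 -> dens1 rho mu x (Ck C g k0) -> mu_nbhd rho mu x (Vcore x).
Proof.
move=> Cx Hx Hdx. split; first by left.
exists (fun y => ~ C y \/ (Ck C g k0 y /\ ball rho y0 r0 y)); split.
  apply: borel_union; first exact: borel_compl (borel_closed HCc).
  apply: borel_inter; first exact: borel_closed ((@Ck_closed _ _ _ _ _ Hdm _ _ _ HL Hlip k0 HCc)).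
  exact: borel_ball (mmet Hd) y0 r0.
split; first by move=> y H; right.
have H1 := dens1_inter Hd Hdx (dens1_open (@ball_open _ _ (mmet Hd) y0 r0) Hx).
exact: (dens1_mono Hd H1 (fun y H => or_intror H)).
Qed.

Lemma acc_piece x : C x -> mu_acc rho mu C x -> rho x y0 < r0 -> dens1 rho mu x (Ck C g k0) ->
  mu_acc rho mu Piece x.
Proof.
move=> Cx Hacc Hx Hdx U HU.
case: (Hacc _ (nbhd_inter Hd HU (Vcore_nbhd Cx Hx Hdx))) => y [Cy [[Uy Vy] Hyx]].
exists y; split=> //. case: Vy => [//|[//|[Hk Hb]]]. split=> //. rewrite /Defs.ball in Hb. lra.
Qed.

Lemma h_lip i y z : Piece y -> Piece z -> d (h i y) (h i z) <= L * rho y z.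
Proof. move=> [Hy Hry] [Hz Hrz]. exact (KL3 (mmet Hd) Hdm HL Hlip i Cy0 Hy Hry Hz Hrz). Qed.

Lemma A_piece x i : C x -> mu_acc rho mu C x -> Ck C g k0 x -> rho x y0 < r0 ->
  dens1 rho mu x (Ck C g k0) -> A_mu rho mu d Piece (h i) x.
Proof.
move=> Cx Hacc Hk Hx Hdx. split; first by split=> //; lra.
split; first exact: acc_piece.
exists (fun _ => True), L; split; first exact: nbhd_full Hd x.
move=> y _ Py Hyx. have Px : Piece x by split=> //; lra.
have Hp : 0 < rho y x.
  have := rho_ge0 (mmet Hd) y x. case/Rle_lt_or_eq_dec => // E. exfalso; apply: Hyx. by apply/(rho_eq0 (mmet Hd)).
have := h_lip i Py Px. move=> H. apply: (Rmult_le_reg_r (rho y x)) => //.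
rewrite /Rdiv Rmult_assoc Rinv_l; lra.
Qed.

Lemma assemble x : C x -> mu_acc rho mu C x -> Ck C g k0 x -> rho x y0 < r0 ->
  dens1 rho mu x (Ck C g k0) -> (forall i, approx_diff rho mu d D Piece (h i) x) ->
  approx_diff rho mu (AQ_dist Q d) (DQ rho mu d Q D) C g x.
Proof.
move=> Cx Hacc Hk Hx Hdx Happ.
have Hmet := mmet Hd.
pose good (f : X -> M) (BF : (X -> Prop) * (X -> M)) := D x BF.1 BF.2 /\ BF.2 x = f x /\
  mu_lim_within rho mu (fun y => Piece y /\ BF.1 y) x (fun y => d (f y) (BF.2 y) / rho y x) 0.
pose gch (f : X -> M) := match excluded_middle_informative (exists BF, good f BF) with
  | left H => proj1_sig (constructive_indefinite_description _ H) | right _ => (fun _ : X => True, f) end.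
have Hgood : forall i, good (h i) (gch (h i)).
  move=> i. rewrite /gch. case: excluded_middle_informative => [H|H].
  - exact: (proj2_sig (constructive_indefinite_description _ H)).
  - exfalso; apply: H. case: (Happ i) => _ [_ [B0 [F0 [H1 [H2 H3]]]]]. by exists (B0, F0).
pose Bi i := (gch (h i)).1. pose Hi i := (gch (h i)).2.
have HDi : forall i, D x (Bi i) (Hi i) by move=> i; exact: (proj1 (Hgood i)).
have Hxi : forall i, Hi i x = h i x by move=> i; exact: (proj1 (proj2 (Hgood i))).
have Hrep : forall i, germ_rep rho mu d x (Bi i) (Hi i) by move=> i; exact: (proj1 HD _ _ _ (HDi i)).
pose Bs y := forall i, Bi i y.
pose F y := AQ_of (fun i => Hi i y).
have HBs : mu_nbhd rho mu x Bs by apply: nbhd_forall => i; exact: (proj1 (Hrep i)).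
have [Lf HLf] : exists Lf : 'I_Q -> R, forall i y z, Bi i y -> Bi i z -> d (Hi i y) (Hi i z) <= Lf i * rho y z.
  exists (fun i => proj1_sig (constructive_indefinite_description _ (proj2 (Hrep i)))).
  move=> i; exact: (proj2_sig (constructive_indefinite_description _ (proj2 (Hrep i)))).
pose Ls := \big[Rplus/0]_(i < Q) Rabs (Lf i).
have HLs : 0 <= Ls by apply: sum_ge0 => i; exact: Rabs_pos.
have HFlip : lipschitz_on rho (AQ_dist Q d) Bs F.
  exists (sqrt (INR Q) * Ls) => y z By Bz. rewrite Rmult_assoc. apply: AQ_dist_of_bound.
    apply: Rmult_le_pos => //; exact: rho_ge0.
  move=> i. apply: Rle_trans (HLf i y z (By i) (Bz i)) _. apply: Rmult_le_compat_r; first exact: rho_ge0.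
  apply: Rle_trans (Rle_abs _) _. apply: (term_le_sum (F := fun j => Rabs (Lf j))) => j. exact: Rabs_pos.
have HgxA : g x = AQ_of (fun i => h i x) := KL2 Hdm HL Hlip Cy0 Hk (Rlt_le _ _ Hx).
have Hgx : F x = g x.
  rewrite HgxA /F. f_equal. apply: functional_extensionality => i. exact: Hxi.
split=> //; split=> //.
exists Bs, F; split; last split=> //.
- split; first by split.
  exists Bs, F; split; first by split.
  split; first exact: germ_equiv_refl (AQ_dist_refl Hdm).
  exists Bi, Hi; split=> //; split.
  + case: (nbhd_borel Hd HBs) => W [HWb [HW HWs]]. exists W; split=> //; split=> //; split=> // y Wy.
    split; [exact: HWs|move=> i; exact: HWs].
  + move=> i j Eij. case: (classic (G y0 i = G y0 j)) => E.
    * have Eh : h i = h j by rewrite E.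
      rewrite /Bi /Hi Eh. exact: germ_equiv_refl (rho_xx Hdm).
    * exfalso. case: (KL Hdm HL Hlip Cy0 Hk (Rlt_le _ _ Hx)) => s [Hh [Hc _]].
      rewrite !Hxi !Hh in Eij.
      have Hs := sep_le d E. have Hs0 := sep_pos Hdm (G y0).
      have := Hc i. have := Hc j. rewrite Eij.
      have := rho_tri Hdm (G y0 i) (G x ((s^-1)%g j)) (G y0 j).
      rewrite (rho_sym Hdm (G y0 i) (G x _)). lra.
- move=> eps He.
  have Hsq := sqrt_pos (INR Q).
  have He' : 0 < eps / (sqrt (INR Q) + 1) by apply: Rdiv_lt_0_compat; lra.
  have HU : forall i, exists U, mu_nbhd rho mu x U /\ forall y, U y -> (Piece y /\ Bi i y) -> y <> x ->
      Rabs (d (h i y) (Hi i y) / rho y x - 0) < eps / (sqrt (INR Q) + 1).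
    move=> i. exact: (proj2 (proj2 (Hgood i)) _ He').
  pose Uf i := proj1_sig (constructive_indefinite_description _ (HU i)).
  have HUf : forall i, mu_nbhd rho mu x (Uf i) /\ forall y, Uf i y -> (Piece y /\ Bi i y) -> y <> x ->
      Rabs (d (h i y) (Hi i y) / rho y x - 0) < eps / (sqrt (INR Q) + 1).
    move=> i. exact: (proj2_sig (constructive_indefinite_description _ (HU i))).
  exists (fun y => (forall i, Uf i y) /\ Vcore x y). split.
    have HU1 : mu_nbhd rho mu x (fun y => forall i, Uf i y) by apply: nbhd_forall => i; exact: (proj1 (HUf i)).
    exact: (nbhd_inter Hd HU1 (Vcore_nbhd Cx Hx Hdx)).
  move=> y [HUy Vy] [Cy By] Hyx.
  have Py : Piece y.
    case: Vy => [E|[NC|[Hky Hb]]]; [by []|by []|split=> //]. rewrite /Defs.ball in Hb. lra.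
  have Hp : 0 < rho y x.
    have := rho_ge0 Hmet y x. case/Rle_lt_or_eq_dec => // E0. exfalso; apply: Hyx. by apply/(rho_eq0 Hmet).
  have HgyA : g y = AQ_of (fun i => h i y) := KL2 Hdm HL Hlip Cy0 (proj1 Py) (proj2 Py).
  have Hdi : forall i, d (h i y) (Hi i y) <= eps / (sqrt (INR Q) + 1) * rho y x.
    move=> i. have := proj2 (HUf i) y (HUy i) (conj Py (By i)) Hyx.
    rewrite Rminus_0_r Rabs_right; last first.
      apply: Rle_ge; apply: Rle_mult_inv_pos => //; exact: rho_ge0.
    move=> H. apply: Rlt_le. apply: (Rmult_lt_reg_r (/ rho y x)); first exact: Rinv_0_lt_compat.
    rewrite Rmult_assoc Rinv_r; lra.
  have Hb := AQ_dist_of_bound (t := fun i => h i y) (t' := fun i => Hi i y) (c := eps / (sqrt (INR Q) + 1) * rho y x)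
    ltac:(apply: Rmult_le_pos; lra) Hdi.
  rewrite -HgyA in Hb. rewrite Rminus_0_r Rabs_right; last first.
    apply: Rle_ge; apply: Rle_mult_inv_pos => //; exact: AQ_dist_ge0.
  apply: (Rmult_lt_reg_r (rho y x)) => //. rewrite /Rdiv Rmult_assoc Rinv_l; last lra. rewrite Rmult_1_r.
  apply: Rle_lt_trans Hb _. rewrite -Rmult_assoc. apply: Rmult_lt_compat_r => //.
  have -> : sqrt (INR Q) * (eps / (sqrt (INR Q) + 1)) = eps * (sqrt (INR Q) / (sqrt (INR Q) + 1)) by field; lra.
  have : sqrt (INR Q) / (sqrt (INR Q) + 1) < 1.
    apply: (Rmult_lt_reg_r (sqrt (INR Q) + 1)); first lra. rewrite /Rdiv Rmult_assoc Rinv_l; lra.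
  move=> H. have := Rmult_lt_compat_l eps _ _ He H. lra.
Qed.

End Main2.
Lemma om_union_fin (X : Type) (mu : (X -> Prop) -> Rbar) (Q : nat) (A : 'I_Q -> X -> Prop) :
  outer_measure mu -> (forall i, mu (A i) = Fin 0) -> mu (fun x => exists i, A i x) = Fin 0.
Proof.
move=> Hom H.
apply: (om_null_sub Hom (B := fun x => exists n : nat, (fun x => exists i : 'I_Q, nat_of_ord i = n /\ A i x) x)).
  apply: om_union_null => // n. case: (ltnP n Q) => Hn.
  - apply: (om_null_sub Hom (H (Ordinal Hn))). move=> x [i [Ei Ai]].
    have -> : Ordinal Hn = i by apply: val_inj => /=. exact: Ai.
  - apply: om_empty' => // x [i [Ei _]]. have := ltn_ord i. by rewrite Ei ltnNge Hn.
move=> x [i Ai]. exists (nat_of_ord i), i. by split.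
Qed.

Theorem theorem3p3 (X : Type) (rho : X -> X -> R) (mu : (X -> Prop) -> Rbar) (K : R)
    (M : Type) (d : M -> M -> R) (Q : nat)
    (D : X -> (X -> Prop) -> (X -> M) -> Prop) :
  doubling_mms rho mu K ->
  complete_metric d ->
  (1 <= Q)%N ->
  approx_distribution rho mu d D ->
  diff_complete rho mu d D ->
  diff_complete rho mu (AQ_dist Q d) (DQ rho mu d Q D).
Proof.
move=> Hd Hcm HQ HD HDc C g B [c Cc] HCc [L0 HL0] HBm HBA.
have Hdm : is_metric d by case: Hcm.
have Hmet := mmet Hd. have Hom := mom Hd.
pose L := Rabs L0 + 1.
have HL : 0 < L by have := Rabs_pos L0; rewrite /L; lra.
have Hlip : forall y z, C y -> C z -> AQ_dist Q d (g y) (g z) <= L * rho y z.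
  move=> y z Cy Cz. apply: Rle_trans (HL0 y z Cy Cz) _. apply: Rmult_le_compat_r; first exact: rho_ge0.
  have := Rle_abs L0. rewrite /L; lra.
case: (msep Hd) => S [[f Hinj] Hdense].
pose T k y := C y /\ ndist (AQ_rep (g y)) = k.
pose cand (a n k : nat) y := T k y /\ exists s, S s /\ f s = a /\ rho y s < / (INR n + 1).
pose yo a n k : option X := match excluded_middle_informative (exists y, cand a n k y) with
  | left H => Some (proj1_sig (constructive_indefinite_description _ H)) | right _ => None end.
have Hyo : forall a n k y0, yo a n k = Some y0 -> cand a n k y0.
  move=> a n k y0. rewrite /yo. case: excluded_middle_informative => // H [<-].
  exact: (proj2_sig (constructive_indefinite_description _ H)).
have Hyo' : forall a n k y, cand a n k y -> exists y0, yo a n k = Some y0.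
  move=> a n k y Hy. rewrite /yo. case: excluded_middle_informative => H; first by eexists.
  exfalso; apply: H; by exists y.
pose Nk k x := Ck C g k x /\ ~ dens1 rho mu x (Ck C g k).
have HNk : forall k, mu (Nk k) = Fin 0.
  move=> k. rewrite /Nk. exact: (density_thm Hd (@Ck_closed _ _ _ _ _ Hdm _ _ _ HL Hlip k HCc)).
pose r0 y0 := sep d (AQ_rep (g y0)) / (8 * L).
pose Bp y0 x := B x /\ Ck C g (ndist (AQ_rep (g y0))) x /\ ball rho y0 (r0 y0) x /\ ~ Nk (ndist (AQ_rep (g y0))) x.
pose Z a n k (i : 'I_Q) x := match yo a n k with
  | Some y0 => Bp y0 x /\ ~ approx_diff rho mu d D (Piece rho d C g L y0) (hfun d g (sep d (AQ_rep (g y0))) (AQ_rep (g y0) i)) x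
  | None => False end.
have HZ : forall a n k i, mu (Z a n k i) = Fin 0.
  move=> a n k i. rewrite /Z. case E: (yo a n k) => [y0|]; last exact: om_empty.
  have [[Cy0 _] _] := Hyo _ _ _ _ E.
  apply: HDc.
  - exists y0. split; first by split.
    rewrite rho_xx //. apply: Rlt_le. apply: Rdiv_lt_0_compat; [exact: sep_pos|lra].
  - exact: (Piece_closed Hd Hdm HL Hlip HCc).
  - exists L => y z Py Pz. exact: (h_lip Hd Hdm HL Hlip Cy0 i Py Pz).
  - rewrite /Bp. apply: meas_inter => //. apply: meas_inter => //.
      apply: (borel_meas Hd). apply: borel_closed. exact: (@Ck_closed _ _ _ _ _ Hdm _ _ _ HL Hlip _ HCc).
    apply: meas_inter => //; first by apply: (borel_meas Hd); exact: borel_ball.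
    apply: meas_compl. exact: meas_null.
  - move=> x [Bx [Hk [Hb HN]]]. have [Cx [Hacc _]] := HBA x Bx.
    have Hdx : dens1 rho mu x (Ck C g (ndist (AQ_rep (g y0)))) by apply: NNPP => H; apply: HN.
    exact: (A_piece Hd Hdm HL Hlip HCc Cy0 i Cx Hacc Hk Hb Hdx).
apply: (om_null_sub Hom (B := fun x => (exists k, Nk k x) \/
   exists a, (fun x => exists n, (fun x => exists k, (fun x => exists i, Z a n k i x) x) x) x)).
  apply: Rbar_le_antisym; last exact: om_ge0.
  apply: Rbar_le_trans (om_sub2 Hom _ _) _.
  rewrite (om_union_null Hom HNk).
  rewrite (om_union_null Hom (A := fun a => fun x => exists n, (fun x => exists k, (fun x => exists i, Z a n k i x) x) x)).
    rewrite /= Rplus_0_r. exact: Rle_refl.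
  move=> a. apply: om_union_null => // n. apply: om_union_null => // k.
  apply: om_union_fin => // i.
move=> x [Bx Hnd].
have [Cx [Hacc _]] := HBA x Bx.
set k := ndist (AQ_rep (g x)).
case: (classic (dens1 rho mu x (Ck C g k))) => Hdx; last first.
  left. exists k. split; [split; [exact: Cx| exact: leqnn] | exact: Hdx].
right.
set Px := AQ_rep (g x).
have Hsx := sep_pos Hdm Px. have Hsx1 := sep_le1 d Px.
pose eta := sep d Px / (40 * L).
have Heta : 0 < eta by apply: Rdiv_lt_0_compat; lra.
have Heta2 : 0 < eta / 2 by lra.
case: (archimed_cor1 _ Heta2) => n [Hn Hn0].
have HnI : 0 < INR n by apply: lt_0_INR.
have Hn' : / (INR n + 1) < eta / 2.
  apply: Rle_lt_trans Hn. apply: Rlt_le. apply: Rinv_lt_contravar; [apply: Rmult_lt_0_compat|]; lra.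
have Hinvp : 0 < / (INR n + 1) by apply: Rinv_0_lt_compat; lra.
case: (Hdense x _ Hinvp) => s [Ss Hxs].
have Hcx : cand (f s) n k x by split; [split|exists s].
case: (Hyo' _ _ _ _ Hcx) => y0 Ey0.
have [[Cy0 Hky0] [s' [Ss' [Es' Hy0s']]]] := Hyo _ _ _ _ Ey0.
have Ess : s' = s by apply: Hinj.
subst s'.
have Hxy0 : rho x y0 < eta.
  have := rho_tri Hmet x s y0. rewrite (rho_sym Hmet s y0). lra.
case: (match_dist Hdm Hlip Cy0 Cx) => sg Hsg.
have HLe : L * rho y0 x <= sep d Px / 40.
  rewrite (rho_sym Hmet y0 x). have := Rmult_le_compat_l L _ _ (Rlt_le _ _ HL) (Rlt_le _ _ Hxy0).
  have -> : L * eta = sep d Px / 40 by rewrite /eta; field; lra. by [].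
have Hsep : forall i j, Px i <> Px j -> sep d Px <= d (Px i) (Px j) by move=> i j; exact: sep_le.
have [_ HL1] := L1 Hdm Hsep (eps := sep d Px / 40) ltac:(lra) (fun j => Rle_trans _ _ _ (Hsg j) HLe).
have HL1' := HL1 (eq_leq Hky0).
have Hsy0 : sep d Px / 2 <= sep d (AQ_rep (g y0)).
  apply: sep_ge; first lra. move=> i j Hij.
  have Hne : Px (sg i) <> Px (sg j) by move=> E; apply: Hij; exact: HL1'.
  have := Hsep _ _ Hne. have := Rle_trans _ _ _ (Hsg i) HLe. have := Rle_trans _ _ _ (Hsg j) HLe.
  have := rho_tri Hdm (Px (sg i)) (AQ_rep (g y0) i) (Px (sg j)).
  have := rho_tri Hdm (AQ_rep (g y0) i) (AQ_rep (g y0) j) (Px (sg j)).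
  rewrite -/Px (rho_sym Hdm (Px (sg i)) (AQ_rep (g y0) i)). lra.
have Hxr0 : rho x y0 < r0 y0.
  apply: Rlt_le_trans Hxy0 _. rewrite /eta /r0 /Rdiv.
  have HiL : 0 < / L by apply: Rinv_0_lt_compat.
  rewrite !Rinv_mult. nra.
have Hk0 : ndist (AQ_rep (g y0)) = k by [].
have Hkx : Ck C g (ndist (AQ_rep (g y0))) x by split=> //; rewrite Hk0.
have Hdx0 : dens1 rho mu x (Ck C g (ndist (AQ_rep (g y0)))) by rewrite Hk0.
have [i Hi] : exists i : 'I_Q, ~ approx_diff rho mu d D (Piece rho d C g L y0) (hfun d g (sep d (AQ_rep (g y0))) (AQ_rep (g y0) i)) x.
  apply: NNPP => H. apply: Hnd. apply: (assemble Hd Hdm HD HL Hlip HCc Cy0 Cx Hacc Hkx Hxr0 Hdx0).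
  move=> i. apply: NNPP => Hi. apply: H. by exists i.
exists (f s), n, k, i. rewrite /Z Ey0. split=> //. split=> //. split=> //. split=> //.
by case.
Qed.
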